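(* Let $-A$ be the generator of a bounded $C_0$-semigroup $(T(s))_{s\ge0}$ on a Banach space $X$. Suppose $\varphi:(0,\infty)\to(0,\infty)$ satisfies $\varphi(t)\searrow0$ as $t\to\infty$ and \[\|\mathcal C_t(A)x\|=O(\varphi(t))\quad(t\to\infty)\quad\text{for every }x\in\operatorname{dom}_\infty(A):=\bigcap_{n\ge0}\operatorname{dom}(A^n).\] Then $A$ is invertible (i.e. has a bounded inverse defined on all of $X$).
   Context: Cesàro means: $\mathcal C_t(A)x=\frac1t\int_0^tT(s)x\,\mathrm ds$ for $t>0$, $x\in X$. *)

(* Defs.v *)
From Stdlib Require Import Reals Lra.
Open Scope R_scope.

Record Banach := {
  bcar :> Type;
  bzero : bcar;
  badd : bcar -> bcar -> bcar;
  bopp : bcar -> bcar;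
  bscal : R -> bcar -> bcar;
  bnorm : bcar -> R;
  badd_assoc : forall x y z, badd x (badd y z) = badd (badd x y) z;
  badd_comm : forall x y, badd x y = badd y x;
  badd_0 : forall x, badd bzero x = x;
  badd_opp : forall x, badd x (bopp x) = bzero;
  bscal_addr : forall a x y, bscal a (badd x y) = badd (bscal a x) (bscal a y);
  bscal_addl : forall a b x, bscal (a + b) x = badd (bscal a x) (bscal b x);
  bscal_assoc : forall a b x, bscal a (bscal b x) = bscal (a * b) x;
  bscal_1 : forall x, bscal 1 x = x;
  bnorm_nonneg : forall x, 0 <= bnorm x;
  bnorm_eq0 : forall x, bnorm x = 0 -> x = bzero;
  bnorm_scal : forall a x, bnorm (bscal a x) = Rabs a * bnorm x;
  bnorm_triangle : forall x y, bnorm (badd x y) <= bnorm x + bnorm y;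
  bcomplete : forall u : nat -> bcar,
    (forall eps, 0 < eps -> exists N, forall m n, (N <= m)%nat -> (N <= n)%nat ->
        bnorm (badd (u m) (bopp (u n))) < eps) ->
    exists l, forall eps, 0 < eps -> exists N, forall n, (N <= n)%nat ->
        bnorm (badd (u n) (bopp l)) < eps
}.

Arguments bzero {_}. Arguments badd {_}. Arguments bopp {_}.
Arguments bscal {_}. Arguments bnorm {_}.

Definition bsub {X : Banach} (x y : X) : X := badd x (bopp y).

Definition is_linear {X : Banach} (L : X -> X) : Prop :=
  (forall x y, L (badd x y) = badd (L x) (L y)) /\
  (forall a x, L (bscal a x) = bscal a (L x)).

(* Bounded C0-semigroup (T(s))_{s>=0}; T is only used on s >= 0. *)
Definition bounded_C0_semigroup {X : Banach} (T : R -> X -> X) : Prop :=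
  (forall s, 0 <= s -> is_linear (T s)) /\
  (forall x, T 0 x = x) /\
  (forall s t x, 0 <= s -> 0 <= t -> T (s + t) x = T s (T t x)) /\
  (forall x s, 0 <= s -> forall eps, 0 < eps -> exists delta, 0 < delta /\
      forall r, 0 <= r -> Rabs (r - s) < delta -> bnorm (bsub (T r x) (T s x)) < eps) /\
  (exists M, forall s x, 0 <= s -> bnorm (T s x) <= M * bnorm x).

(* gen_rel T x y : x is in dom(A) and A x = y, where -A is the generator of T,
   i.e. (T(h)x - x)/h -> -y as h -> 0+. *)
Definition gen_rel {X : Banach} (T : R -> X -> X) (x y : X) : Prop :=
  forall eps, 0 < eps -> exists delta, 0 < delta /\
    forall h, 0 < h -> h < delta ->
      bnorm (badd (bscal (/ h) (bsub (T h x) x)) y) < eps.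

Fixpoint in_dom_pow {X : Banach} (T : R -> X -> X) (n : nat) (x : X) : Prop :=
  match n with
  | O => True
  | S m => exists y, gen_rel T x y /\ in_dom_pow T m y
  end.

Definition in_dom_inf {X : Banach} (T : R -> X -> X) (x : X) : Prop :=
  forall n, in_dom_pow T n x.

Fixpoint vsum {X : Banach} (n : nat) (f : nat -> X) : X :=
  match n with
  | O => bzero
  | S m => badd (vsum m f) (f m)
  end.

Definition riemann_sum {X : Banach} (f : R -> X) (a b : R) (n : nat) : X :=
  vsum n (fun k => bscal ((b - a) / INR n) (f (a + INR k * (b - a) / INR n))).

(* v = \int_a^b f (Riemann integral; for continuous f the uniform Riemann
   sums converge to it) *)
Definition is_integral {X : Banach} (f : R -> X) (a b : R) (v : X) : Prop :=
  forall eps, 0 < eps -> exists N, forall n, (N <= n)%nat ->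
    bnorm (bsub (riemann_sum f a b n) v) < eps.

Definition cesaro {X : Banach} (T : R -> X -> X) (t : R) (x c : X) : Prop :=
  exists w, is_integral (fun s => T s x) 0 t w /\ c = bscal (/ t) w.

(* Main.v *)
Require Import Defs.
From Stdlib Require Import Reals.
From Stdlib Require Import Lra Lia ZArith List Classical ClassicalEpsilon.
Open Scope R_scope.

Arguments badd_assoc {_}. Arguments badd_comm {_}. Arguments badd_0 {_}.
Arguments badd_opp {_}. Arguments bscal_addr {_}. Arguments bscal_addl {_}.
Arguments bscal_assoc {_}. Arguments bscal_1 {_}. Arguments bnorm_nonneg {_}.
Arguments bnorm_eq0 {_}. Arguments bnorm_scal {_}. Arguments bnorm_triangle {_}.
Arguments bcomplete {_}.

Section Basic.
Context {X : Banach}.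
Implicit Types x y z : X.

Lemma badd_0r x : badd x bzero = x.
Proof. rewrite badd_comm; apply badd_0. Qed.

Lemma badd_cancel_l x y z : badd x y = badd x z -> y = z.
Proof.
  intros H.
  rewrite <- (badd_0 y), <- (badd_0 z).
  rewrite <- (badd_opp x), (badd_comm x (bopp x)), <- !badd_assoc, H; reflexivity.
Qed.

Lemma bscal_0l x : bscal 0 x = bzero.
Proof.
  apply (badd_cancel_l (bscal 0 x)). rewrite <- bscal_addl, Rplus_0_r, badd_0r; reflexivity.
Qed.

Lemma bscal_0r a : bscal a (@bzero X) = bzero.
Proof.
  apply (badd_cancel_l (bscal a bzero)). rewrite <- bscal_addr, badd_0, badd_0r; reflexivity.
Qed.

Lemma bopp_eq x : bopp x = bscal (-1) x.
Proof.
  apply (badd_cancel_l x). rewrite badd_opp.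
  rewrite <- (bscal_1 x) at 1. rewrite <- bscal_addl. replace (1 + -1) with 0 by ring.
  rewrite bscal_0l; reflexivity.
Qed.

Lemma bnorm_zero : bnorm (@bzero X) = 0.
Proof. rewrite <- (bscal_0l bzero), bnorm_scal, Rabs_R0; ring. Qed.

Lemma bnorm_opp x : bnorm (bopp x) = bnorm x.
Proof. rewrite bopp_eq, bnorm_scal. replace (Rabs (-1)) with 1. ring. rewrite Rabs_left by lra; ring. Qed.

(* reflexive normalizer for module expressions *)
Inductive vexp := VVar (n : nat) | V0 | VAdd (a b : vexp) | VOpp (a : vexp) | VScal (r : R) (a : vexp).

Fixpoint veval (env : list X) (e : vexp) : X :=
  match e with
  | VVar n => nth n env bzero
  | V0 => bzero
  | VAdd a b => badd (veval env a) (veval env b)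
  | VOpp a => bopp (veval env a)
  | VScal r a => bscal r (veval env a)
  end.

Fixpoint vcoef (i : nat) (e : vexp) : R :=
  match e with
  | VVar n => if Nat.eqb n i then 1 else 0
  | V0 => 0
  | VAdd a b => vcoef i a + vcoef i b
  | VOpp a => - vcoef i a
  | VScal r a => r * vcoef i a
  end.

Lemma vsum_ext n (f g : nat -> X) : (forall i, (i < n)%nat -> f i = g i) -> vsum n f = vsum n g.
Proof.
  induction n; simpl; intros H; auto.
  rewrite IHn by (intros; apply H; lia). rewrite H by lia. reflexivity.
Qed.

Lemma vsum_add n (f g : nat -> X) : vsum n (fun i => badd (f i) (g i)) = badd (vsum n f) (vsum n g).
Proof.
  induction n; simpl. rewrite badd_0; reflexivity.
  rewrite IHn. rewrite !badd_assoc. f_equal. rewrite <- !badd_assoc. f_equal. apply badd_comm.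
Qed.

Lemma vsum_scal n r (f : nat -> X) : vsum n (fun i => bscal r (f i)) = bscal r (vsum n f).
Proof.
  induction n; simpl. rewrite bscal_0r; reflexivity.
  rewrite IHn, bscal_addr; reflexivity.
Qed.

Lemma vsum_zero n : vsum n (fun _ => @bzero X) = bzero.
Proof. induction n; simpl; auto. rewrite IHn, badd_0; reflexivity. Qed.

Lemma vsum_var n N (env : list X) :
  vsum N (fun i => bscal (if Nat.eqb n i then 1 else 0) (nth i env bzero)) =
  if Nat.ltb n N then nth n env bzero else bzero.
Proof.
  induction N; simpl. reflexivity.
  rewrite IHN.
  destruct (Nat.eqb n N) eqn:E.
  - apply Nat.eqb_eq in E; subst. rewrite bscal_1.
    replace (Nat.ltb N N) with false by (symmetry; apply Nat.ltb_ge; lia).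
    replace (Nat.ltb N (S N)) with true by (symmetry; apply Nat.ltb_lt; lia).
    apply badd_0.
  - apply Nat.eqb_neq in E. rewrite bscal_0l, badd_0r.
    destruct (Nat.ltb n N) eqn:E2; destruct (Nat.ltb n (S N)) eqn:E3; auto.
    + apply Nat.ltb_lt in E2; apply Nat.ltb_ge in E3; lia.
    + apply Nat.ltb_ge in E2; apply Nat.ltb_lt in E3; lia.
Qed.

Lemma veval_nf (env : list X) e :
  veval env e = vsum (length env) (fun i => bscal (vcoef i e) (nth i env bzero)).
Proof.
  induction e; simpl.
  - rewrite vsum_var. destruct (Nat.ltb n (length env)) eqn:E; auto.
    apply Nat.ltb_ge in E. rewrite nth_overflow; auto.
  - symmetry. rewrite (vsum_ext _ _ (fun _ => bzero)). apply vsum_zero.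
    intros; apply bscal_0l.
  - rewrite IHe1, IHe2, <- vsum_add. apply vsum_ext; intros. symmetry; apply bscal_addl.
  - rewrite IHe, bopp_eq, <- vsum_scal. apply vsum_ext; intros.
    rewrite bscal_assoc. f_equal; ring.
  - rewrite IHe, <- vsum_scal. apply vsum_ext; intros. rewrite bscal_assoc; reflexivity.
Qed.

Fixpoint allcoef (N : nat) (e1 e2 : vexp) : Prop :=
  match N with O => True | S k => vcoef k e1 = vcoef k e2 /\ allcoef k e1 e2 end.

Lemma veval_sound (env : list X) e1 e2 : allcoef (length env) e1 e2 -> veval env e1 = veval env e2.
Proof.
  intros H. rewrite !veval_nf. apply vsum_ext.
  revert H. generalize (length env). induction n; simpl; intros [H1 H2] i Hi || (intros; lia).
  destruct (Nat.eq_dec i n). subst; rewrite H1; auto. apply IHn; auto; lia.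
Qed.

End Basic.

Ltac vadd_atom t l :=
  match l with
  | context [cons t _] => l
  | _ => constr:(cons t l)
  end.

Ltac vatoms t l :=
  lazymatch t with
  | badd ?a ?b => let l1 := vatoms a l in vatoms b l1
  | bsub ?a ?b => let l1 := vatoms a l in vatoms b l1
  | bopp ?a => vatoms a l
  | bscal _ ?a => vatoms a l
  | bzero => l
  | _ => vadd_atom t l
  end.

Ltac vfind t l :=
  match l with
  | cons t _ => constr:(O)
  | cons _ ?l' => let n := vfind t l' in constr:(S n)
  end.

Ltac vreify t l :=
  lazymatch t with
  | badd ?a ?b => let ea := vreify a l in let eb := vreify b l in constr:(VAdd ea eb)
  | bsub ?a ?b => let ea := vreify a l in let eb := vreify b l in constr:(VAdd ea (VOpp eb))
  | bopp ?a => let ea := vreify a l in constr:(VOpp ea)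
  | bscal ?r ?a => let ea := vreify a l in constr:(VScal r ea)
  | bzero => constr:(V0)
  | _ => let n := vfind t l in constr:(VVar n)
  end.

Ltac vgroup :=
  match goal with
  | |- @eq (bcar ?X) ?lhs ?rhs =>
    let l0 := vatoms lhs (@nil (bcar X)) in
    let l := vatoms rhs l0 in
    let e1 := vreify lhs l in
    let e2 := vreify rhs l in
    change (veval l e1 = veval l e2); apply veval_sound;
    cbv [allcoef vcoef length Nat.eqb]; repeat split; ring
  end.



Ltac vgroupF :=
  match goal with
  | |- @eq (bcar ?X) ?lhs ?rhs =>
    let l0 := vatoms lhs (@nil (bcar X)) in
    let l := vatoms rhs l0 in
    let e1 := vreify lhs l in
    let e2 := vreify rhs l in
    change (veval l e1 = veval l e2); apply veval_sound;
    cbv [allcoef vcoef length Nat.eqb]; repeat split; field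
  end.


Section More.
Context {X : Banach}.
Implicit Types x y z : X.

Lemma bnorm_sub_sym x y : bnorm (bsub x y) = bnorm (bsub y x).
Proof. replace (bsub x y) with (bopp (bsub y x)) by vgroup. apply bnorm_opp. Qed.

Lemma bnorm_sub_tri x y z : bnorm (bsub x z) <= bnorm (bsub x y) + bnorm (bsub y z).
Proof. replace (bsub x z) with (badd (bsub x y) (bsub y z)) by vgroup. apply bnorm_triangle. Qed.

Lemma bnorm_sub_le x y : bnorm (bsub x y) <= bnorm x + bnorm y.
Proof. unfold bsub. rewrite <- (bnorm_opp y). apply bnorm_triangle. Qed.

Lemma bnorm_rev x y : bnorm x - bnorm y <= bnorm (bsub x y).
Proof. replace x with (badd (bsub x y) y) at 1 by vgroup. pose proof (bnorm_triangle (bsub x y) y). lra. Qed.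

Lemma bsub_eq0 x y : bnorm (bsub x y) = 0 -> x = y.
Proof. intros H. apply bnorm_eq0 in H. replace x with (badd (bsub x y) y) by vgroup. rewrite H, badd_0; auto. Qed.

Lemma bnorm_le_eps x : (forall eps, 0 < eps -> bnorm x <= eps) -> x = bzero.
Proof.
  intros H. apply bnorm_eq0. pose proof (bnorm_nonneg x).
  destruct (Req_dec (bnorm x) 0); auto. specialize (H (bnorm x / 2)). lra.
Qed.

Lemma vsum_const n x : vsum n (fun _ => x) = bscal (INR n) x.
Proof.
  induction n. simpl. rewrite bscal_0l; auto.
  cbn [vsum]. rewrite IHn, S_INR, bscal_addl, bscal_1; auto.
Qed.

Lemma vsum_norm_le n (f : nat -> X) c :
  (forall k, (k < n)%nat -> bnorm (f k) <= c) -> bnorm (vsum n f) <= INR n * c.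
Proof.
  induction n; intros H. simpl; rewrite bnorm_zero; lra.
  cbn [vsum]. eapply Rle_trans. apply bnorm_triangle.
  rewrite S_INR. specialize (IHn (fun k Hk => H k ltac:(lia))). specialize (H n ltac:(lia)). lra.
Qed.

Lemma vsum_split a b (f : nat -> X) : vsum (a + b) f = badd (vsum a f) (vsum b (fun j => f (a + j)%nat)).
Proof.
  induction b; simpl. rewrite Nat.add_0_r, badd_0r; auto.
  rewrite Nat.add_succ_r. simpl. rewrite IHb. symmetry; apply badd_assoc.
Qed.

Lemma vsum_double n m (f : nat -> X) :
  vsum (n * m) f = vsum n (fun k => vsum m (fun j => f (k * m + j)%nat)).
Proof.
  induction n; simpl. auto.
  replace (m + n * m)%nat with (n * m + m)%nat by lia.
  rewrite vsum_split, IHn. auto.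
Qed.

Lemma vsum_sub n (f g : nat -> X) : vsum n (fun i => bsub (f i) (g i)) = bsub (vsum n f) (vsum n g).
Proof.
  induction n; simpl. vgroup. rewrite IHn. vgroup.
Qed.

Lemma lin_zero (L : X -> X) : is_linear L -> L bzero = bzero.
Proof. intros [H1 H2]. replace (@bzero X) with (bscal 0 (@bzero X)) at 1 by apply bscal_0l.
  rewrite H2, bscal_0l; auto. Qed.

Lemma lin_vsum (L : X -> X) n (f : nat -> X) : is_linear L -> L (vsum n f) = vsum n (fun k => L (f k)).
Proof.
  intros HL. induction n; simpl.
  - apply lin_zero; auto.
  - rewrite (proj1 HL), IHn; auto.
Qed.


Lemma lin_opp (L : X -> X) x : is_linear L -> L (bopp x) = bopp (L x).
Proof. intros [H1 H2]. rewrite !bopp_eq, H2; auto. Qed.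

Lemma lin_sub (L : X -> X) x y : is_linear L -> L (bsub x y) = bsub (L x) (L y).
Proof. intros H. unfold bsub. rewrite (proj1 H), lin_opp; auto. Qed.

Definition blim (u : nat -> X) (l : X) : Prop :=
  forall eps, 0 < eps -> exists N, forall n, (N <= n)%nat -> bnorm (bsub (u n) l) < eps.

Lemma blim_unique u l1 l2 : blim u l1 -> blim u l2 -> l1 = l2.
Proof.
  intros H1 H2. apply bsub_eq0. apply Rle_antisym; [|apply bnorm_nonneg].
  apply Rnot_lt_le; intros Hp.
  destruct (H1 _ (ltac:(lra) : 0 < bnorm (bsub l1 l2) / 2)) as [N1 HN1].
  destruct (H2 _ (ltac:(lra) : 0 < bnorm (bsub l1 l2) / 2)) as [N2 HN2].
  specialize (HN1 (N1 + N2)%nat ltac:(lia)). specialize (HN2 (N1 + N2)%nat ltac:(lia)).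
  pose proof (bnorm_sub_tri l1 (u (N1 + N2)%nat) l2). rewrite (bnorm_sub_sym l1 (u (N1 + N2)%nat)) in H. lra.
Qed.

Lemma blim_le u l c e : blim u l -> (exists N0, forall n, (N0 <= n)%nat -> bnorm (bsub (u n) c) <= e) ->
  bnorm (bsub l c) <= e.
Proof.
  intros H [N0 HN0]. apply Rnot_lt_le; intros Hp.
  destruct (H _ (ltac:(lra) : 0 < bnorm (bsub l c) - e)) as [N1 HN1].
  specialize (HN1 (N0 + N1)%nat ltac:(lia)). specialize (HN0 (N0 + N1)%nat ltac:(lia)).
  pose proof (bnorm_sub_tri l (u (N0 + N1)%nat) c). rewrite (bnorm_sub_sym l (u (N0 + N1)%nat)) in H0. lra.
Qed.

Lemma blim_ext u v l : (exists N0, forall n, (N0 <= n)%nat -> u n = v n) -> blim u l -> blim v l.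
Proof.
  intros [N0 H0] H eps He. destruct (H eps He) as [N HN]. exists (N0 + N)%nat; intros n Hn.
  rewrite <- H0 by lia. apply HN; lia.
Qed.

Lemma blim_close u v l : blim u l -> (forall eps, 0 < eps -> exists N, forall n, (N <= n)%nat -> bnorm (bsub (v n) (u n)) < eps) -> blim v l.
Proof.
  intros H1 H2 eps He.
  destruct (H1 (eps/2) ltac:(lra)) as [N1 HN1]. destruct (H2 (eps/2) ltac:(lra)) as [N2 HN2].
  exists (N1 + N2)%nat; intros n Hn.
  pose proof (bnorm_sub_tri (v n) (u n) l). specialize (HN1 n ltac:(lia)). specialize (HN2 n ltac:(lia)). lra.
Qed.

Lemma blim_Lip (L : X -> X) K u l : (forall a b, bnorm (bsub (L a) (L b)) <= K * bnorm (bsub a b)) ->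
  blim u l -> blim (fun n => L (u n)) (L l).
Proof.
  intros HL H eps He.
  destruct (H (eps / (Rabs K + 1))) as [N HN]. apply Rdiv_lt_0_compat; [lra| pose proof (Rabs_pos K); lra].
  exists N; intros n Hn. specialize (HN n Hn). eapply Rle_lt_trans. apply HL.
  pose proof (Rabs_pos K). pose proof (Rle_abs K). pose proof (bnorm_nonneg (bsub (u n) l)).
  apply Rle_lt_trans with ((Rabs K + 1) * bnorm (bsub (u n) l)). nra.
  replace eps with ((Rabs K + 1) * (eps / (Rabs K + 1))) by (field; lra).
  apply Rmult_lt_compat_l; lra.
Qed.

Lemma blim_add u v l1 l2 : blim u l1 -> blim v l2 -> blim (fun n => badd (u n) (v n)) (badd l1 l2).
Proof.
  intros H1 H2 eps He.
  destruct (H1 (eps/2) ltac:(lra)) as [N1 HN1]. destruct (H2 (eps/2) ltac:(lra)) as [N2 HN2].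
  exists (N1 + N2)%nat; intros n Hn.
  replace (bsub (badd (u n) (v n)) (badd l1 l2)) with (badd (bsub (u n) l1) (bsub (v n) l2)) by vgroup.
  eapply Rle_lt_trans. apply bnorm_triangle. specialize (HN1 n ltac:(lia)). specialize (HN2 n ltac:(lia)). lra.
Qed.

Lemma blim_scal r u l : blim u l -> blim (fun n => bscal r (u n)) (bscal r l).
Proof.
  intros H. apply (blim_Lip (bscal r) (Rabs r)); auto.
  intros a b. replace (bsub (bscal r a) (bscal r b)) with (bscal r (bsub a b)) by vgroup.
  rewrite bnorm_scal; lra.
Qed.

Lemma blim_opp u l : blim u l -> blim (fun n => bopp (u n)) (bopp l).
Proof.
  intros H. rewrite bopp_eq. apply (blim_ext (fun n => bscal (-1) (u n))).
  exists O; intros; rewrite bopp_eq; auto. apply blim_scal; auto.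
Qed.

Lemma blim_sub u v l1 l2 : blim u l1 -> blim v l2 -> blim (fun n => bsub (u n) (v n)) (bsub l1 l2).
Proof. intros. apply blim_add; auto. apply blim_opp; auto. Qed.

Lemma blim_const x : blim (fun _ => x) x.
Proof. intros eps He; exists O; intros. replace (bsub x x) with (@bzero X) by vgroup. rewrite bnorm_zero; auto. Qed.

Lemma blim_shift u l k : blim u l -> blim (fun n => u (n + k)%nat) l.
Proof. intros H eps He. destruct (H eps He) as [N HN]. exists N; intros; apply HN; lia. Qed.

Lemma blim_norm_le u l c : blim u l -> (exists N0, forall n, (N0 <= n)%nat -> bnorm (u n) <= c) -> bnorm l <= c.
Proof.
  intros H [N0 HN]. replace l with (bsub l bzero) by vgroup.
  apply (blim_le u); auto. exists N0; intros. replace (bsub (u n) bzero) with (u n) by vgroup. auto.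
Qed.

Lemma cauchy_lim (u : nat -> X) :
  (forall eps, 0 < eps -> exists N, forall m n, (N <= m)%nat -> (N <= n)%nat -> bnorm (bsub (u m) (u n)) < eps) ->
  exists l, blim u l.
Proof. intros H. destruct (bcomplete u H) as [l Hl]. exists l. exact Hl. Qed.

End More.

Lemma inv_INR_small eps : 0 < eps -> exists N, forall n, (N <= n)%nat -> / INR (S n) < eps.
Proof.
  intros He. destruct (archimed (/ eps)) as [H1 _].
  assert (0 < / eps) by (apply Rinv_0_lt_compat; auto).
  exists (Z.to_nat (up (/ eps))). intros n Hn.
  assert (Hz: (0 <= up (/eps))%Z) by (apply le_IZR; lra).
  assert (E: INR (Z.to_nat (up (/eps))) = IZR (up (/eps))) by (rewrite INR_IZR_INZ, Z2Nat.id; auto).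
  apply le_INR in Hn. rewrite S_INR.
  rewrite <- (Rinv_inv eps). apply Rinv_lt_contravar.
  apply Rmult_lt_0_compat; [lra|]. pose proof (pos_INR n); lra.
  lra.
Qed.


Section Baire.
Context {X : Banach} (F : nat -> X -> Prop).
Context (Fclosed : forall k (zn : nat -> X) z, blim zn z -> (forall n, F k (zn n)) -> F k z)
  (Fcover : forall z, exists k, F k z).

Lemma compl_open k z : ~ F k z -> exists rho, 0 < rho /\ forall w, bnorm (bsub w z) < rho -> ~ F k w.
Proof.
  intros Hz. apply NNPP. intros Hn.
  assert (Hall: forall n : nat, exists w, bnorm (bsub w z) < / INR (S n) /\ F k w).
  { intros n. apply NNPP. intros Hw. apply Hn. exists (/ INR (S n)). split.
    apply Rinv_0_lt_compat, lt_0_INR; lia.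
    intros w Hw1 Hw2. apply Hw. exists w; auto. }
  set (wn := fun n => epsilon (inhabits z) (fun w => bnorm (bsub w z) < / INR (S n) /\ F k w)).
  assert (Hwn: forall n, bnorm (bsub (wn n) z) < / INR (S n) /\ F k (wn n)).
  { intros n. unfold wn. apply (epsilon_spec (inhabits z) (fun w => bnorm (bsub w z) < / INR (S n) /\ F k w)). apply Hall. }
  apply Hz. apply (Fclosed k wn z).
  - intros eps He. destruct (inv_INR_small eps He) as [N HN]. exists N; intros n Hn'.
    eapply Rlt_trans. apply Hwn. apply HN; auto.
  - intros n; apply Hwn.
Qed.

Definition stepP (k : nat) (p p' : X * R) : Prop :=
  0 < snd p -> 0 < snd p' /\ snd p' <= snd p / 4 /\ bnorm (bsub (fst p') (fst p)) < snd p / 2 /\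
    forall w, bnorm (bsub w (fst p')) < snd p' -> ~ F k w.

Lemma baire_thm : exists k z0 r, 0 < r /\ forall z, bnorm (bsub z z0) < r -> F k z.
Proof.
  apply NNPP. intros Hno.
  assert (Hb: forall k z0 r, 0 < r -> exists z, bnorm (bsub z z0) < r /\ ~ F k z).
  { intros k z0 r Hr. apply NNPP. intros Hn. apply Hno. exists k, z0, r. split; auto.
    intros z Hz. apply NNPP. intros Hf. apply Hn. exists z; auto. }
  assert (Hstep: forall k p, exists p', stepP k p p').
  { intros k [z r]. destruct (Rlt_dec 0 r) as [Hr|Hr].
    - destruct (Hb k z (r / 2) ltac:(lra)) as [z' [Hz1 Hz2]].
      destruct (compl_open k z' Hz2) as [rho [Hrho Hrho']].
      exists (z', Rmin rho (r / 4)). unfold stepP; simpl. intros _. split; [|split; [|split]].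
      + apply Rmin_glb_lt; lra.
      + apply Rmin_r.
      + auto.
      + intros w Hw. apply Hrho'. eapply Rlt_le_trans. apply Hw. apply Rmin_l.
    - exists (z, r). unfold stepP; simpl. intros; lra. }
  set (stepf := fun k p => epsilon (inhabits p) (stepP k p)).
  assert (Hsf: forall k p, stepP k p (stepf k p)).
  { intros k p. unfold stepf. apply epsilon_spec. apply Hstep. }
  set (st := fix st (n : nat) : X * R := match n with O => (bzero, 1) | S m => stepf m (st m) end).
  set (z := fun n => fst (st n)). set (r := fun n => snd (st n)).
  assert (Hr: forall n, 0 < r n).
  { induction n. unfold r; simpl; lra. unfold r; simpl. apply (Hsf n (st n)). apply IHn. }
  assert (HS: forall n, r (S n) <= r n / 4 /\ bnorm (bsub (z (S n)) (z n)) < r n / 2 /\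
      forall w, bnorm (bsub w (z (S n))) < r (S n) -> ~ F n w).
  { intros n. destruct (Hsf n (st n) (Hr n)) as [_ [H1 [H2 H3]]]. auto. }
  assert (Hrn: forall n, r n <= / INR (S n)).
  { induction n. unfold r; simpl; lra.
    destruct (HS n) as [H1 _]. rewrite S_INR in *. rewrite S_INR. pose proof (pos_INR n).
    apply Rle_trans with (/ (INR n + 1) / 4). lra.
    unfold Rdiv. rewrite <- Rinv_mult. apply Rinv_le_contravar; lra. }
  assert (Hc: forall j n, bnorm (bsub (z (n + j)%nat) (z n)) <= 2/3 * r n - 2/3 * r (n + j)%nat).
  { induction j; intros n.
    - rewrite Nat.add_0_r. replace (bsub (z n) (z n)) with (@bzero X) by vgroup. rewrite bnorm_zero; lra.
    - rewrite Nat.add_succ_r. eapply Rle_trans. apply (bnorm_sub_tri _ (z (n + j)%nat)).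
      destruct (HS (n + j)%nat) as [H1 [H2 _]]. specialize (IHj n). lra. }
  destruct (cauchy_lim z) as [zs Hzs].
  { intros eps He. destruct (inv_INR_small (eps / 2) ltac:(lra)) as [N HN]. exists N. intros m n Hm Hn.
    pose proof (Hc (m - N)%nat N). pose proof (Hc (n - N)%nat N).
    replace (N + (m - N))%nat with m in H by lia. replace (N + (n - N))%nat with n in H0 by lia.
    pose proof (Hr m). pose proof (Hr n). pose proof (Hrn N). specialize (HN N (le_n _)).
    pose proof (bnorm_sub_tri (z m) (z N) (z n)) as HT. rewrite (bnorm_sub_sym (z N)) in HT. lra. }
  destruct (Fcover zs) as [k Hk].
  destruct (HS k) as [_ [_ H3]]. apply (H3 zs); auto.
  assert (bnorm (bsub zs (z (S k))) <= 2/3 * r (S k)).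
  { apply (blim_le z); auto. exists (S k). intros n Hn. pose proof (Hc (n - S k)%nat (S k)).
    replace (S k + (n - S k))%nat with n in H by lia. pose proof (Hr n). lra. }
  pose proof (Hr (S k)). lra.
Qed.
End Baire.


Lemma vsum_telescope {X : Banach} n (g : nat -> X) : vsum n (fun k => bsub (g (S k)) (g k)) = bsub (g n) (g O).
Proof. induction n; simpl. vgroup. rewrite IHn. vgroup. Qed.


Lemma floor_nat r : 0 <= r -> exists m : nat, INR m <= r < INR m + 1.
Proof.
  intros Hr. destruct (base_Int_part r) as [H1 H2].
  assert (Hz: (0 <= Int_part r)%Z).
  { destruct (Z_lt_le_dec (Int_part r) 0) as [l|l]; auto. exfalso.
    assert (Int_part r <= -1)%Z by lia. apply IZR_le in H. lra. }
  exists (Z.to_nat (Int_part r)). rewrite INR_IZR_INZ, Z2Nat.id by auto. lra.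
Qed.

Definition flo (r : R) : nat := epsilon (inhabits O) (fun m => INR m <= r < INR m + 1).
Lemma flo_spec r : 0 <= r -> INR (flo r) <= r < INR (flo r) + 1.
Proof. intros Hr. unfold flo. apply (epsilon_spec (inhabits O) (fun m => INR m <= r < INR m + 1)). apply floor_nat; auto. Qed.

Lemma vsum_shift {X : Banach} n m (f : nat -> X) :
  bsub (vsum n (fun k => f (k + m)%nat)) (vsum n f) = bsub (vsum m (fun k => f (n + k)%nat)) (vsum m f).
Proof.
  pose proof (vsum_split m n f) as H1. pose proof (vsum_split n m f) as H2.
  rewrite Nat.add_comm in H1. rewrite H1 in H2.
  rewrite (vsum_ext n (fun k => f (k + m)%nat) (fun j => f (m + j)%nat)) by (intros; f_equal; lia).
  set (A := vsum n (fun j => f (m + j)%nat)) in *. set (B := vsum m (fun j => f (n + j)%nat)) in *.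
  replace A with (bsub (badd (vsum m f) A) (vsum m f)) by vgroup. rewrite H2. vgroup.
Qed.

Definition aa (j : nat) : R := (/ 2) ^ j.
Lemma aa_pos j : 0 < aa j.
Proof. unfold aa. apply pow_lt. lra. Qed.
Lemma aa_S j : aa (S j) = aa j / 2.
Proof. unfold aa. simpl. field. Qed.
Lemma aa_add k n : aa (k + n) = aa k * aa n.
Proof. unfold aa. apply pow_add. Qed.
Lemma aa_le n : aa n <= / INR (S n).
Proof.
  induction n. simpl. unfold aa; simpl; lra.
  rewrite aa_S. rewrite !S_INR. rewrite S_INR in IHn. pose proof (pos_INR n).
  apply Rle_trans with (/ (INR n + 1) / 2). lra.
  unfold Rdiv. rewrite <- Rinv_mult. apply Rinv_le_contravar; lra.
Qed.
Lemma aa_small eps : 0 < eps -> exists N, forall n, (N <= n)%nat -> aa n < eps.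
Proof.
  intros He. destruct (inv_INR_small eps He) as [N HN]. exists N; intros n Hn.
  eapply Rle_lt_trans. apply aa_le. apply HN; auto.
Qed.

Section Semi.
Context {X : Banach} (T : R -> X -> X) (hT : bounded_C0_semigroup T).
Implicit Types x y z u v : X.

Lemma T_lin s : 0 <= s -> is_linear (T s).
Proof. apply hT. Qed.
Lemma T_0 x : T 0 x = x.
Proof. apply hT. Qed.
Lemma T_add s t x : 0 <= s -> 0 <= t -> T (s + t) x = T s (T t x).
Proof. apply hT. Qed.
Lemma T_cont x s : 0 <= s -> forall eps, 0 < eps -> exists delta, 0 < delta /\
      forall r, 0 <= r -> Rabs (r - s) < delta -> bnorm (bsub (T r x) (T s x)) < eps.
Proof. apply hT. Qed.

Definition M0 : R := proj1_sig (constructive_indefinite_description _ (proj2 (proj2 (proj2 (proj2 hT))))).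
Definition MM : R := Rmax 1 M0.
Lemma MM_ge1 : 1 <= MM.
Proof. apply Rmax_l. Qed.
Lemma T_bound s x : 0 <= s -> bnorm (T s x) <= MM * bnorm x.
Proof.
  intros Hs. unfold MM, M0. destruct (constructive_indefinite_description _ _) as [M HM]; simpl.
  eapply Rle_trans. apply HM; auto. apply Rmult_le_compat_r. apply bnorm_nonneg. apply Rmax_r.
Qed.

Lemma T_comm r s x : 0 <= r -> 0 <= s -> T r (T s x) = T s (T r x).
Proof. intros. rewrite <- !T_add by auto. rewrite Rplus_comm; auto. Qed.
Lemma T_sub s x y : 0 <= s -> T s (bsub x y) = bsub (T s x) (T s y).
Proof. intros; apply lin_sub, T_lin; auto. Qed.
Lemma T_scal s a x : 0 <= s -> T s (bscal a x) = bscal a (T s x).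
Proof. intros; apply T_lin; auto. Qed.
Lemma T_badd s x y : 0 <= s -> T s (badd x y) = badd (T s x) (T s y).
Proof. intros; apply T_lin; auto. Qed.
Lemma T_lip s x y : 0 <= s -> bnorm (bsub (T s x) (T s y)) <= MM * bnorm (bsub x y).
Proof. intros; rewrite <- T_sub by auto; apply T_bound; auto. Qed.

Lemma T_cont0 x eps : 0 < eps -> exists delta, 0 < delta /\ forall r, 0 <= r < delta -> bnorm (bsub (T r x) x) < eps.
Proof.
  intros He. destruct (T_cont x 0 (Rle_refl 0) eps He) as [d [Hd H]]. exists d; split; auto.
  intros r Hr. rewrite <- (T_0 x) at 2. apply H. lra. rewrite Rminus_0_r, Rabs_pos_eq; lra.
Qed.

Definition RS u t n : X := vsum n (fun k => bscal (t / INR n) (T (INR k * t / INR n) u)).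

Lemma RS_eq u t n : riemann_sum (fun s => T s u) 0 t n = RS u t n.
Proof.
  unfold riemann_sum, RS. apply vsum_ext; intros. rewrite Rminus_0_r, Rplus_0_l; auto.
Qed.

Lemma sk_bounds k n t : (k < n)%nat -> 0 <= t -> 0 <= INR k * t / INR n /\ (0 < t -> INR k * t / INR n < t).
Proof.
  intros Hk Ht. assert (Hn: 0 < INR n) by (apply lt_0_INR; lia).
  assert (Hk': INR k < INR n) by (apply lt_INR; auto). pose proof (pos_INR k).
  split. apply Rmult_le_pos. apply Rmult_le_pos; lra. left; apply Rinv_0_lt_compat; lra.
  intros. apply (Rmult_lt_reg_r (INR n)); auto. unfold Rdiv. rewrite Rmult_assoc, Rinv_l by lra. nra.
Qed.

Lemma RS_approx u t n v e : 0 <= t -> (1 <= n)%nat ->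
  (forall s, 0 <= s < t -> bnorm (bsub (T s u) v) <= e) ->
  bnorm (bsub (RS u t n) (bscal t v)) <= t * e.
Proof.
  intros Ht Hn H.
  assert (HnR: 0 < INR n) by (apply lt_0_INR; lia).
  assert (E: bscal t v = vsum n (fun _ => bscal (t / INR n) v)).
  { rewrite vsum_const, bscal_assoc. f_equal. field. lra. }
  rewrite E. unfold RS. rewrite <- vsum_sub.
  replace (t * e) with (INR n * (t / INR n * e)) by (field; lra).
  apply vsum_norm_le. intros k Hk.
  replace (bsub (bscal (t / INR n) (T (INR k * t / INR n) u)) (bscal (t / INR n) v))
    with (bscal (t / INR n) (bsub (T (INR k * t / INR n) u) v)) by vgroup.
  rewrite bnorm_scal, Rabs_pos_eq by (apply Rmult_le_pos; [lra| left; apply Rinv_0_lt_compat; lra]).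
  destruct (sk_bounds k n t Hk Ht) as [H1 H2].
  destruct Ht as [Ht|Ht].
  - apply Rmult_le_compat_l. apply Rmult_le_pos; [lra| left; apply Rinv_0_lt_compat; lra].
    apply H; split; auto.
  - subst. unfold Rdiv. rewrite !Rmult_0_l. lra.
Qed.

Lemma RS_lin (L : X -> X) u t n : is_linear L -> 0 <= t -> (forall s, 0 <= s -> L (T s u) = T s (L u)) ->
  L (RS u t n) = RS (L u) t n.
Proof.
  intros HL Ht HT. unfold RS. rewrite lin_vsum by auto. destruct (le_lt_dec n 0).
  - destruct n; [simpl; auto| lia].
  - apply vsum_ext; intros k Hk. rewrite (proj2 HL). f_equal. apply HT. apply sk_bounds; auto.
Qed.

Lemma RS_sub u v t n : 0 <= t -> bsub (RS u t n) (RS v t n) = RS (bsub u v) t n.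
Proof.
  intros Ht. unfold RS. rewrite <- vsum_sub. apply vsum_ext; intros k Hk.
  destruct (sk_bounds k n t Hk Ht) as [Hp _].
  rewrite T_sub by auto. vgroup.
Qed.

Lemma RS_scal a u t n : 0 <= t -> bscal a (RS u t n) = RS (bscal a u) t n.
Proof.
  intros Ht. unfold RS. rewrite <- vsum_scal. apply vsum_ext; intros k Hk.
  destruct (sk_bounds k n t Hk Ht) as [Hp _].
  rewrite T_scal by auto. vgroup.
Qed.

Lemma RS_T r u t n : 0 <= r -> 0 <= t -> T r (RS u t n) = RS (T r u) t n.
Proof.
  intros Hr Ht. apply RS_lin; auto. apply T_lin; auto. intros; apply T_comm; auto.
Qed.

Lemma RS_cauchy u t n m w : 0 <= t -> (1 <= n)%nat -> (1 <= m)%nat ->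
  (forall s, 0 <= s <= t / INR n -> bnorm (bsub (T s u) u) <= w) ->
  bnorm (bsub (RS u t n) (RS u t (n * m))) <= t * (MM * w).
Proof.
  intros Ht Hn Hm H.
  assert (HnR: 0 < INR n) by (apply lt_0_INR; lia).
  assert (HmR: 0 < INR m) by (apply lt_0_INR; lia).
  unfold RS at 2. rewrite vsum_double. unfold RS. rewrite <- vsum_sub.
  replace (t * (MM * w)) with (INR n * (t / INR n * (MM * w))) by (field; lra).
  apply vsum_norm_le. intros k Hk.
  assert (E: bscal (t / INR n) (T (INR k * t / INR n) u) =
     vsum m (fun j => bscal (t / INR (n * m)) (T (INR k * t / INR n) u))).
  { rewrite vsum_const, bscal_assoc, mult_INR. f_equal. field. lra. }
  rewrite E, <- vsum_sub.
  replace (t / INR n * (MM * w)) with (INR m * (t / INR (n * m) * (MM * w))) by (rewrite mult_INR; field; lra).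
  apply vsum_norm_le. intros j Hj.
  assert (HnmR: 0 < INR (n * m)) by (rewrite mult_INR; nra).
  assert (Hsk: 0 <= INR k * t / INR n) by (apply sk_bounds; auto).
  assert (Hsj: 0 <= INR j * t / INR (n * m)) by (apply sk_bounds; auto; nia).
  assert (Hsum: INR (k * m + j) * t / INR (n * m) = INR k * t / INR n + INR j * t / INR (n * m)).
  { rewrite plus_INR, !mult_INR. field. lra. }
  rewrite Hsum, T_add by auto.
  replace (bsub (bscal (t / INR (n * m)) (T (INR k * t / INR n) u))
      (bscal (t / INR (n * m)) (T (INR k * t / INR n) (T (INR j * t / INR (n * m)) u))))
    with (bscal (t / INR (n * m)) (bsub (T (INR k * t / INR n) u) (T (INR k * t / INR n) (T (INR j * t / INR (n * m)) u)))) by vgroup.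
  rewrite bnorm_scal, Rabs_pos_eq by (apply Rmult_le_pos; [lra| left; apply Rinv_0_lt_compat; lra]).
  apply Rmult_le_compat_l. apply Rmult_le_pos; [lra| left; apply Rinv_0_lt_compat; lra].
  eapply Rle_trans. apply T_lip; auto. apply Rmult_le_compat_l. pose proof MM_ge1; lra.
  rewrite bnorm_sub_sym. apply H. split; auto.
  rewrite mult_INR. apply (Rmult_le_reg_r (INR n * INR m)). nra.
  assert (INR j + 1 <= INR m) by (rewrite <- S_INR; apply le_INR; lia).
  unfold Rdiv. replace (INR j * t * / (INR n * INR m) * (INR n * INR m)) with (INR j * t) by (field; lra).
  replace (t * / INR n * (INR n * INR m)) with (t * INR m) by (field; lra). nra.
Qed.

Lemma integral_exists u t : 0 <= t -> exists w, is_integral (fun s => T s u) 0 t w.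
Proof.
  intros Ht.
  assert (Hc: forall eps, 0 < eps -> exists N, forall m n, (N <= m)%nat -> (N <= n)%nat ->
     bnorm (bsub (RS u t m) (RS u t n)) < eps).
  { intros eps He.
    destruct (T_cont0 u (eps / (2 * (t + 1) * MM))) as [d [Hd Hdd]].
    { pose proof MM_ge1. apply Rdiv_lt_0_compat; auto. nra. }
    destruct (inv_INR_small (d / (t + 1))) as [N HN]. apply Rdiv_lt_0_compat; lra.
    exists (S N). intros m n Hm Hn.
    assert (Hw: forall p, (S N <= p)%nat -> forall s, 0 <= s <= t / INR p -> bnorm (bsub (T s u) u) <= eps / (2 * (t + 1) * MM)).
    { intros p Hp s Hs. left. apply Hdd. split. lra.
      destruct p. lia. specialize (HN p ltac:(lia)).
      apply Rle_lt_trans with (t / INR (S p)). lra.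
      assert (0 < INR (S p)) by (apply lt_0_INR; lia).
      unfold Rdiv in *. apply (Rmult_lt_compat_l (t + 1)) in HN; [|lra].
      replace ((t + 1) * (d * / (t + 1))) with d in HN by (field; lra).
      apply Rle_lt_trans with ((t + 1) * / INR (S p)); auto.
      apply Rmult_le_compat_r. left; apply Rinv_0_lt_compat; auto. lra. }
    pose proof (RS_cauchy u t m n _ Ht ltac:(lia) ltac:(lia) (Hw m Hm)).
    pose proof (RS_cauchy u t n m _ Ht ltac:(lia) ltac:(lia) (Hw n Hn)).
    rewrite Nat.mul_comm in H0.
    pose proof (bnorm_sub_tri (RS u t m) (RS u t (m * n)) (RS u t n)).
    rewrite (bnorm_sub_sym (RS u t (m * n))) in H1.
    pose proof MM_ge1.
    assert (t * (MM * (eps / (2 * (t + 1) * MM))) < eps / 2).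
    { replace (t * (MM * (eps / (2 * (t + 1) * MM)))) with (eps / 2 * (t / (t + 1))) by (field; lra).
      assert (t / (t + 1) < 1). { apply (Rmult_lt_reg_r (t + 1)). lra. unfold Rdiv. rewrite Rmult_assoc, Rinv_l; lra. }
      assert (0 <= t / (t+1)) by (apply Rmult_le_pos; [lra| left; apply Rinv_0_lt_compat; lra]). nra. }
    lra. }
  destruct (cauchy_lim _ Hc) as [w Hw]. exists w.
  intros eps He. destruct (Hw eps He) as [N HN]. exists N; intros n Hn. rewrite RS_eq. apply HN; auto.
Qed.


Definition Vint u t : X := epsilon (inhabits bzero) (fun w => is_integral (fun s => T s u) 0 t w).

Lemma Vint_lim u t : 0 <= t -> blim (RS u t) (Vint u t).
Proof.
  intros Ht. unfold Vint. destruct (integral_exists u t Ht) as [w Hw].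
  pose proof (epsilon_spec (inhabits bzero) _ (ex_intro _ w Hw)) as H.
  intros eps He. destruct (H eps He) as [N HN]. exists N; intros n Hn.
  rewrite <- RS_eq. apply HN; auto.
Qed.

Lemma Vint_integral u t : 0 <= t -> is_integral (fun s => T s u) 0 t (Vint u t).
Proof.
  intros Ht eps He. destruct (Vint_lim u t Ht eps He) as [N HN]. exists N; intros n Hn.
  rewrite RS_eq. apply HN; auto.
Qed.

Lemma Vint_sub u v t : 0 <= t -> bsub (Vint u t) (Vint v t) = Vint (bsub u v) t.
Proof.
  intros Ht. apply (blim_unique (RS (bsub u v) t)); [| apply Vint_lim; auto].
  apply (blim_ext (fun n => bsub (RS u t n) (RS v t n))).
  exists O; intros; apply RS_sub; auto.
  apply blim_sub; apply Vint_lim; auto.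
Qed.

Lemma Vint_scal a u t : 0 <= t -> bscal a (Vint u t) = Vint (bscal a u) t.
Proof.
  intros Ht. apply (blim_unique (RS (bscal a u) t)); [| apply Vint_lim; auto].
  apply (blim_ext (fun n => bscal a (RS u t n))).
  exists O; intros; apply RS_scal; auto.
  apply blim_scal; apply Vint_lim; auto.
Qed.

Lemma Vint_approx u t v e : 0 <= t -> (forall s, 0 <= s < t -> bnorm (bsub (T s u) v) <= e) ->
  bnorm (bsub (Vint u t) (bscal t v)) <= t * e.
Proof.
  intros Ht H. apply (blim_le (RS u t)). apply Vint_lim; auto.
  exists 1%nat; intros. apply RS_approx; auto.
Qed.

Lemma Vint_bound u t : 0 <= t -> bnorm (Vint u t) <= t * (MM * bnorm u).
Proof.
  intros Ht. replace (Vint u t) with (bsub (Vint u t) (bscal t bzero)).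
  apply Vint_approx; auto. intros s Hs. replace (bsub (T s u) bzero) with (T s u) by vgroup.
  apply T_bound; lra. rewrite bscal_0r. vgroup.
Qed.

Lemma Vint_lip u v t : 0 <= t -> bnorm (bsub (Vint u t) (Vint v t)) <= t * MM * bnorm (bsub u v).
Proof. intros Ht. rewrite Vint_sub by auto. rewrite Rmult_assoc. apply Vint_bound; auto. Qed.

Lemma Vint_lin (L : X -> X) K u t : is_linear L -> 0 <= t ->
  (forall a b, bnorm (bsub (L a) (L b)) <= K * bnorm (bsub a b)) ->
  (forall s w, 0 <= s -> L (T s w) = T s (L w)) ->
  L (Vint u t) = Vint (L u) t.
Proof.
  intros HL Ht HK HT. apply (blim_unique (RS (L u) t)); [| apply Vint_lim; auto].
  apply (blim_ext (fun n => L (RS u t n))).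
  exists O; intros; apply RS_lin; auto.
  apply (blim_Lip L K); auto. apply Vint_lim; auto.
Qed.

Lemma Vint_T r u t : 0 <= r -> 0 <= t -> T r (Vint u t) = Vint (T r u) t.
Proof.
  intros Hr Ht. apply (Vint_lin (T r) MM); auto. apply T_lin; auto.
  intros; apply T_lip; auto. intros; apply T_comm; auto.
Qed.

Lemma Vint_0 u : Vint u 0 = bzero.
Proof.
  pose proof (Vint_approx u 0 bzero 0 (Rle_refl 0)) as H.
  rewrite bscal_0r, Rmult_0_l in H. replace (Vint u 0) with (bsub (Vint u 0) bzero) by vgroup.
  apply bnorm_eq0. apply Rle_antisym. apply H. intros; lra. apply bnorm_nonneg.
Qed.

(* telescoping: if A x = y then T t x - x = - int_0^t T(s) y ds *)
Lemma Vint_gen x y t : gen_rel T x y -> 0 <= t -> bsub (T t x) x = bopp (Vint y t).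
Proof.
  intros Hg Ht. destruct Ht as [Ht|Ht]; [| subst; rewrite T_0, Vint_0; vgroup].
  assert (bsub (Vint y t) (bopp (bsub (T t x) x)) = bzero); [| replace (bsub (T t x) x) with (bsub (bsub (Vint y t) (bopp (bsub (T t x) x))) (Vint y t)) by vgroup; rewrite H; vgroup].
  apply bnorm_le_eps. intros eps He.
  destruct (Hg (eps / (t * MM))) as [d [Hd Hdd]].
  { pose proof (MM_ge1). apply Rdiv_lt_0_compat; auto. nra. }
  apply (blim_le (RS y t)). apply Vint_lim; lra.
  destruct (inv_INR_small (d / (t + 1))) as [N HN]. apply Rdiv_lt_0_compat; lra.
  exists (S N). intros n Hn.
  assert (HnR: 0 < INR n) by (apply lt_0_INR; lia).
  set (h := t / INR n).
  assert (Hh: 0 < h) by (apply Rdiv_lt_0_compat; auto).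
  assert (Hhd: h < d).
  { destruct n. lia. specialize (HN n ltac:(lia)). unfold h.
    unfold Rdiv in *. apply (Rmult_lt_compat_l (t + 1)) in HN; [|lra].
    replace ((t + 1) * (d * / (t + 1))) with d in HN by (field; lra).
    apply Rle_lt_trans with ((t + 1) * / INR (S n)); auto.
    apply Rmult_le_compat_r. left; apply Rinv_0_lt_compat; auto. lra. }
  set (g := fun k => T (INR k * t / INR n) x).
  assert (Etel: bsub (T t x) x = bsub (g n) (g O)).
  { unfold g. replace (INR n * t / INR n) with t by (field; lra).
    replace (INR 0 * t / INR n) with 0 by (simpl; field; lra). rewrite T_0; auto. }
  rewrite Etel, <- vsum_telescope. unfold RS.
  replace (bsub (vsum n (fun k => bscal (t / INR n) (T (INR k * t / INR n) y)))
      (bopp (vsum n (fun k => bsub (g (S k)) (g k)))))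
    with (vsum n (fun k => badd (bscal (t / INR n) (T (INR k * t / INR n) y)) (bsub (g (S k)) (g k))))
    by (rewrite vsum_add; vgroup).
  replace eps with (INR n * (h * MM * (eps / (t * MM)))) by (unfold h; pose proof (MM_ge1); field; split; lra).
  apply vsum_norm_le. intros k Hk.
  destruct (sk_bounds k n t Hk ltac:(lra)) as [Hs _].
  assert (E: g (S k) = T (INR k * t / INR n) (T h x)).
  { unfold g. rewrite <- T_add by lra. f_equal. rewrite S_INR. unfold h. field. lra. }
  rewrite E. unfold g.
  replace (badd (bscal (t / INR n) (T (INR k * t / INR n) y))
      (bsub (T (INR k * t / INR n) (T h x)) (T (INR k * t / INR n) x)))
    with (T (INR k * t / INR n) (bscal h (badd (bscal (/ h) (bsub (T h x) x)) y))).
  2:{ rewrite T_scal, T_badd, T_scal, T_sub by lra. fold h. vgroupF. all: lra. }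
  eapply Rle_trans. apply T_bound; auto.
  rewrite bnorm_scal, Rabs_pos_eq by lra.
  pose proof (MM_ge1).
  set (q := bnorm _). assert (Hq: q < eps / (t * MM)) by (apply Hdd; auto).
  assert (0 <= q) by apply bnorm_nonneg. assert (0 < t * MM) by nra.
  replace (h * MM * (eps / (t * MM))) with (MM * (h * (eps / (t * MM)))) by ring.
  apply Rmult_le_compat_l. lra. apply Rmult_le_compat_l; lra.
Qed.


Lemma Vint_shift_bound y a h w : 0 < a -> 0 < h ->
  (forall s, 0 <= s < h -> bnorm (bsub (T s y) y) <= w) ->
  bnorm (bsub (bsub (T h (Vint y a)) (Vint y a)) (bscal h (bsub (T a y) y))) <= h * ((MM + 1) * w).
Proof.
  intros Ha Hh Hw.
  assert (Hw0: 0 <= w). { eapply Rle_trans; [apply (bnorm_nonneg (bsub (T 0 y) y))| apply (Hw 0); lra]. }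
  pose proof MM_ge1 as HM.
  set (V := Vint y a). set (D := bsub (T a y) y).
  set (mn := fun n : nat => flo (h * INR n / a)).
  set (hn := fun n : nat => INR (mn n) * a / INR n).
  assert (Hhn: forall n, (1 <= n)%nat -> 0 <= hn n <= h /\ h - a / INR n < hn n).
  { intros n Hn. assert (HnR: 0 < INR n) by (apply lt_0_INR; lia).
    assert (0 <= h * INR n / a) by (apply Rmult_le_pos; [nra| left; apply Rinv_0_lt_compat; lra]).
    destruct (flo_spec _ H) as [F1 F2]. fold (mn n) in F1, F2. pose proof (pos_INR (mn n)).
    unfold hn. split; [split|].
    - apply Rmult_le_pos; [nra| left; apply Rinv_0_lt_compat; lra].
    - apply (Rmult_le_reg_r (INR n / a)). apply Rdiv_lt_0_compat; lra.
      replace (INR (mn n) * a / INR n * (INR n / a)) with (INR (mn n)) by (field; lra).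
      replace (h * (INR n / a)) with (h * INR n / a) by (field; lra). lra.
    - apply (Rmult_lt_reg_r (INR n / a)). apply Rdiv_lt_0_compat; lra.
      replace (INR (mn n) * a / INR n * (INR n / a)) with (INR (mn n)) by (field; lra).
      replace ((h - a / INR n) * (INR n / a)) with (h * INR n / a - 1) by (field; lra). lra. }
  set (E := fun n => bsub (bsub (T (hn n) (RS y a n)) (RS y a n)) (bscal (hn n) D)).
  apply (blim_norm_le E).
  -
    apply (blim_close (fun _ => bsub (bsub (T h V) V) (bscal h D))); [apply blim_const|].
    intros eps He.
    destruct (Vint_lim y a ltac:(lra) (eps / (3 * (MM + 1)))) as [N1 HN1].
    { apply Rdiv_lt_0_compat; lra. }
    destruct (T_cont V h ltac:(lra) (eps / 3) ltac:(lra)) as [d [Hd Hdd]].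
    set (c := Rmin d (eps / (3 * (bnorm D + 1)))).
    assert (Hc: 0 < c). { unfold c. apply Rmin_glb_lt; auto. apply Rdiv_lt_0_compat. lra. pose proof (bnorm_nonneg D); lra. }
    destruct (inv_INR_small (c / a)) as [N2 HN2]. apply Rdiv_lt_0_compat; lra.
    exists (S (N1 + N2)). intros n Hn.
    destruct (Hhn n ltac:(lia)) as [[H1 H2] H3].
    assert (Han: a / INR n < c).
    { destruct n. lia. specialize (HN2 n ltac:(lia)). unfold Rdiv in *.
      apply (Rmult_lt_compat_l a) in HN2; auto. replace (a * (c * / a)) with c in HN2 by (field; lra). lra. }
    assert (Hdist: Rabs (hn n - h) < c) by (rewrite Rabs_left1 by lra; lra).
    unfold E.
    replace (bsub (bsub (bsub (T (hn n) (RS y a n)) (RS y a n)) (bscal (hn n) D)) (bsub (bsub (T h V) V) (bscal h D)))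
      with (badd (badd (bsub (T (hn n) (RS y a n)) (T (hn n) V)) (bsub (T (hn n) V) (T h V)))
             (badd (bopp (bsub (RS y a n) V)) (bscal (h - hn n) D))) by vgroup.
    specialize (HN1 n ltac:(lia)). fold V in HN1.
    assert (P1: bnorm (bsub (T (hn n) (RS y a n)) (T (hn n) V)) <= MM * (eps / (3 * (MM + 1)))).
    { eapply Rle_trans. apply T_lip; lra. apply Rmult_le_compat_l; lra. }
    assert (P2: bnorm (bsub (T (hn n) V) (T h V)) < eps / 3).
    { apply Hdd. lra. apply Rlt_le_trans with c; auto. apply Rmin_l. }
    assert (P3: bnorm (bscal (h - hn n) D) <= eps / 3).
    { rewrite bnorm_scal. rewrite Rabs_minus_sym. assert (c <= eps / (3 * (bnorm D + 1))) by apply Rmin_r.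
      pose proof (bnorm_nonneg D). pose proof (Rabs_pos (hn n - h)).
      apply Rle_trans with (eps / (3 * (bnorm D + 1)) * (bnorm D + 1)).
      nra. right; field; lra. }
    
    pose proof (bnorm_triangle (badd (bsub (T (hn n) (RS y a n)) (T (hn n) V)) (bsub (T (hn n) V) (T h V))) (badd (bopp (bsub (RS y a n) V)) (bscal (h - hn n) D))).
    pose proof (bnorm_triangle (bsub (T (hn n) (RS y a n)) (T (hn n) V)) (bsub (T (hn n) V) (T h V))).
    pose proof (bnorm_triangle (bopp (bsub (RS y a n) V)) (bscal (h - hn n) D)).
    pose proof (bnorm_opp (bsub (RS y a n) V)).
    assert (MM * (eps / (3 * (MM + 1))) + eps / (3 * (MM + 1)) = eps / 3) by (field; lra).
    lra.
  -
    exists 1%nat. intros n Hn.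
    assert (HnR: 0 < INR n) by (apply lt_0_INR; lia).
    destruct (Hhn n Hn) as [[H1 H2] H3].
    set (m := mn n) in *.
    set (f := fun k => bscal (a / INR n) (T (INR k * a / INR n) y)).
    assert (EhT: T (hn n) (RS y a n) = vsum n (fun k => f (k + m)%nat)).
    { unfold RS. rewrite lin_vsum by (apply T_lin; lra). apply vsum_ext; intros k Hk.
      unfold f. rewrite T_scal by lra. f_equal. rewrite <- T_add by (try lra; apply sk_bounds; auto; lra).
      f_equal. unfold hn. fold m. rewrite plus_INR. field. lra. }
    assert (Ehn: bscal (hn n) D = vsum m (fun _ => bscal (a / INR n) D)).
    { rewrite vsum_const, bscal_assoc. f_equal. unfold hn. fold m. field. lra. }
    unfold E. rewrite EhT, Ehn. change (RS y a n) with (vsum n f). rewrite vsum_shift.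
    replace (bsub (bsub (vsum m (fun k => f (n + k)%nat)) (vsum m f)) (vsum m (fun _ => bscal (a / INR n) D)))
      with (vsum m (fun k => bsub (bsub (f (n + k)%nat) (f k)) (bscal (a / INR n) D)))
      by (rewrite !vsum_sub; auto).
    replace (h * ((MM + 1) * w)) with (INR m * (a / INR n * ((MM + 1) * w)) + (h - hn n) * ((MM + 1) * w))
      by (unfold hn; fold m; field; lra).
    assert (0 <= (h - hn n) * ((MM + 1) * w)) by (apply Rmult_le_pos; nra).
    cut (bnorm (vsum m (fun k => bsub (bsub (f (n + k)%nat) (f k)) (bscal (a / INR n) D))) <= INR m * (a / INR n * ((MM + 1) * w))); [lra|].
    apply vsum_norm_le. intros k Hk.
    assert (Hsk: 0 <= INR k * a / INR n).
    { apply Rmult_le_pos. pose proof (pos_INR k); nra. left; apply Rinv_0_lt_compat; lra. }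
    assert (Hsk2: INR k * a / INR n < h).
    { apply Rlt_le_trans with (hn n); [|lra]. unfold hn; fold m.
      apply Rmult_lt_compat_r. apply Rinv_0_lt_compat; lra. apply Rmult_lt_compat_r. lra. apply lt_INR; lia. }
    assert (Ef: f (n + k)%nat = bscal (a / INR n) (T a (T (INR k * a / INR n) y))).
    { unfold f. f_equal. rewrite <- T_add by lra. f_equal. rewrite plus_INR. field. lra. }
    rewrite Ef. unfold f, D.
    replace (bsub (bsub (bscal (a / INR n) (T a (T (INR k * a / INR n) y))) (bscal (a / INR n) (T (INR k * a / INR n) y)))
       (bscal (a / INR n) (bsub (T a y) y)))
      with (bscal (a / INR n) (bsub (bsub (T a (T (INR k * a / INR n) y)) (T a y)) (bsub (T (INR k * a / INR n) y) y))) by vgroup.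
    rewrite bnorm_scal, Rabs_pos_eq by (apply Rmult_le_pos; [lra| left; apply Rinv_0_lt_compat; lra]).
    apply Rmult_le_compat_l. apply Rmult_le_pos; [lra| left; apply Rinv_0_lt_compat; lra].
    eapply Rle_trans. apply bnorm_sub_le.
    rewrite <- T_sub by lra.
    assert (bnorm (bsub (T (INR k * a / INR n) y) y) <= w) by (apply Hw; lra).
    pose proof (T_bound a (bsub (T (INR k * a / INR n) y) y) ltac:(lra)). nra.
Qed.

Lemma Vint_gen2 y a : 0 < a -> gen_rel T (Vint y a) (bsub y (T a y)).
Proof.
  intros Ha eps He. pose proof MM_ge1 as HM.
  destruct (T_cont0 y (eps / (2 * (MM + 1)))) as [d [Hd Hdd]]. apply Rdiv_lt_0_compat; lra.
  exists d; split; auto. intros h Hh Hhd.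
  pose proof (Vint_shift_bound y a h (eps / (2 * (MM + 1))) Ha Hh) as B.
  assert (Hb: forall s, 0 <= s < h -> bnorm (bsub (T s y) y) <= eps / (2 * (MM + 1))).
  { intros s Hs. left; apply Hdd; lra. }
  specialize (B Hb).
  replace (badd (bscal (/ h) (bsub (T h (Vint y a)) (Vint y a))) (bsub y (T a y)))
    with (bscal (/ h) (bsub (bsub (T h (Vint y a)) (Vint y a)) (bscal h (bsub (T a y) y)))) by (vgroupF; lra).
  rewrite bnorm_scal, Rabs_pos_eq by (left; apply Rinv_0_lt_compat; lra).
  apply Rle_lt_trans with (/ h * (h * ((MM + 1) * (eps / (2 * (MM + 1)))))).
  apply Rmult_le_compat_l; auto. left; apply Rinv_0_lt_compat; lra.
  replace (/ h * (h * ((MM + 1) * (eps / (2 * (MM + 1)))))) with (eps / 2) by (field; lra). lra.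
Qed.

Lemma gen_rel_sub x1 y1 x2 y2 : gen_rel T x1 y1 -> gen_rel T x2 y2 -> gen_rel T (bsub x1 x2) (bsub y1 y2).
Proof.
  intros H1 H2 eps He.
  destruct (H1 (eps/2) ltac:(lra)) as [d1 [Hd1 Hd1']]. destruct (H2 (eps/2) ltac:(lra)) as [d2 [Hd2 Hd2']].
  exists (Rmin d1 d2); split. apply Rmin_glb_lt; auto. intros h Hh Hhd.
  assert (h < d1) by (eapply Rlt_le_trans; [apply Hhd| apply Rmin_l]).
  assert (h < d2) by (eapply Rlt_le_trans; [apply Hhd| apply Rmin_r]).
  rewrite T_sub by lra.
  replace (badd (bscal (/ h) (bsub (bsub (T h x1) (T h x2)) (bsub x1 x2))) (bsub y1 y2))
    with (bsub (badd (bscal (/ h) (bsub (T h x1) x1)) y1) (badd (bscal (/ h) (bsub (T h x2) x2)) y2)) by vgroup.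
  eapply Rle_lt_trans. apply bnorm_sub_le.
  specialize (Hd1' h Hh H). specialize (Hd2' h Hh H0). lra.
Qed.

Lemma gen_rel_scal c x y : gen_rel T x y -> gen_rel T (bscal c x) (bscal c y).
Proof.
  intros H eps He.
  destruct (H (eps / (Rabs c + 1))) as [d [Hd Hd']]. apply Rdiv_lt_0_compat; [lra| pose proof (Rabs_pos c); lra].
  exists d; split; auto. intros h Hh Hhd.
  rewrite T_scal by lra.
  replace (badd (bscal (/ h) (bsub (bscal c (T h x)) (bscal c x))) (bscal c y))
    with (bscal c (badd (bscal (/ h) (bsub (T h x) x)) y)) by vgroup.
  rewrite bnorm_scal. specialize (Hd' h Hh Hhd). pose proof (Rabs_pos c).
  pose proof (bnorm_nonneg (badd (bscal (/ h) (bsub (T h x) x)) y)).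
  assert ((Rabs c + 1) * (eps / (Rabs c + 1)) = eps) by (field; lra).
  assert (0 < eps / (Rabs c + 1)) by (apply Rdiv_lt_0_compat; lra). nra.
Qed.

Lemma gen_rel_zero : gen_rel T bzero bzero.
Proof.
  intros eps He. exists 1; split; [lra|]. intros h Hh _.
  rewrite (lin_zero (T h)) by (apply T_lin; lra). replace (badd (bscal (/ h) (bsub (@bzero X) bzero)) bzero) with (@bzero X) by vgroup.
  rewrite bnorm_zero; auto.
Qed.

Lemma gen_rel_unique x y1 y2 : gen_rel T x y1 -> gen_rel T x y2 -> y1 = y2.
Proof.
  intros H1 H2. pose proof (gen_rel_sub _ _ _ _ H1 H2) as H.
  replace (bsub x x) with (@bzero X) in H by vgroup.
  apply bsub_eq0. apply Rle_antisym; [|apply bnorm_nonneg].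
  apply Rnot_lt_le; intros Hp. destruct (H _ Hp) as [d [Hd Hd']].
  specialize (Hd' (d/2) ltac:(lra) ltac:(lra)).
  rewrite (lin_zero (T (d/2))) in Hd' by (apply T_lin; lra).
  replace (badd (bscal (/ (d / 2)) (bsub (@bzero X) bzero)) (bsub y1 y2)) with (bsub y1 y2) in Hd' by vgroup. lra.
Qed.

Lemma gen_bound x y s : gen_rel T x y -> 0 <= s -> bnorm (bsub (T s x) x) <= s * (MM * bnorm y).
Proof. intros H Hs. rewrite (Vint_gen x y s H Hs), bnorm_opp. apply Vint_bound; auto. Qed.

Lemma gen_closed (xn yn : nat -> X) x y : blim xn x -> blim yn y -> (forall n, gen_rel T (xn n) (yn n)) -> gen_rel T x y.
Proof.
  intros Hx Hy Hg.
  assert (E: forall h, 0 < h -> bsub (T h x) x = bopp (Vint y h)).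
  { intros h Hh. apply (blim_unique (fun n => bsub (T h (xn n)) (xn n))).
    - apply blim_sub; auto. apply (blim_Lip (T h) MM); auto. intros; apply T_lip; lra.
    - apply (blim_ext (fun n => bopp (Vint (yn n) h))). exists O; intros; symmetry; apply Vint_gen; auto; lra.
      apply blim_opp. apply (blim_Lip (fun u => Vint u h) (h * MM)); auto. intros; apply Vint_lip; lra. }
  intros eps He. destruct (T_cont0 y (eps/2) ltac:(lra)) as [d [Hd Hdd]].
  exists d; split; auto. intros h Hh Hhd. rewrite E by auto.
  replace (badd (bscal (/ h) (bopp (Vint y h))) y) with (bscal (/ h) (bsub (bscal h y) (Vint y h))) by (vgroupF; lra).
  rewrite bnorm_scal, Rabs_pos_eq by (left; apply Rinv_0_lt_compat; lra).
  rewrite bnorm_sub_sym.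
  assert (bnorm (bsub (Vint y h) (bscal h y)) <= h * (eps / 2)).
  { apply Vint_approx; [lra|]. intros s Hs. left; apply Hdd; lra. }
  apply Rle_lt_trans with (/ h * (h * (eps / 2))).
  apply Rmult_le_compat_l; auto. left; apply Rinv_0_lt_compat; lra.
  replace (/ h * (h * (eps / 2))) with (eps / 2) by (field; lra). lra.
Qed.

Definition P (a : R) (y : X) : X := bscal (/ a) (Vint y a).

Lemma Vint_linear t : 0 <= t -> is_linear (fun u => Vint u t).
Proof.
  intros Ht. split.
  - intros u v. replace (badd u v) with (bsub u (bscal (-1) v)) by vgroup.
    rewrite <- Vint_sub, <- Vint_scal by auto. vgroup.
  - intros c u. symmetry; apply Vint_scal; auto.
Qed.

Lemma P_linear a : 0 < a -> is_linear (P a).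
Proof.
  intros Ha. unfold P. split.
  - intros u v. rewrite (proj1 (Vint_linear a ltac:(lra))). vgroup.
  - intros c u. rewrite (proj2 (Vint_linear a ltac:(lra))). vgroup.
Qed.

Lemma P_bound a y : 0 < a -> bnorm (P a y) <= MM * bnorm y.
Proof.
  intros Ha. unfold P. rewrite bnorm_scal, Rabs_pos_eq by (left; apply Rinv_0_lt_compat; lra).
  apply Rle_trans with (/ a * (a * (MM * bnorm y))).
  apply Rmult_le_compat_l. left; apply Rinv_0_lt_compat; lra. apply Vint_bound; lra.
  right; field; lra.
Qed.

Lemma P_lip a y1 y2 : 0 < a -> bnorm (bsub (P a y1) (P a y2)) <= MM * bnorm (bsub y1 y2).
Proof. intros Ha. rewrite <- lin_sub by (apply P_linear; auto). apply P_bound; auto. Qed.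

Lemma P_T r a y : 0 <= r -> 0 < a -> T r (P a y) = P a (T r y).
Proof. intros Hr Ha. unfold P. rewrite T_scal, Vint_T by lra. auto. Qed.

Lemma P_gen a y : 0 < a -> gen_rel T (P a y) (bscal (/ a) (bsub y (T a y))).
Proof. intros Ha. apply gen_rel_scal. apply Vint_gen2; auto. Qed.

Lemma P_comm a b y : 0 < a -> 0 < b -> P b (P a y) = P a (P b y).
Proof.
  intros Ha Hb. unfold P at 2 3. rewrite (proj2 (P_linear b Hb)).
  rewrite (Vint_lin (P b) MM); auto. apply P_linear; auto. lra.
  intros; apply P_lip; auto. intros; symmetry; apply P_T; auto.
Qed.

Lemma P_near a x y : 0 < a -> gen_rel T x y -> bnorm (bsub (P a x) x) <= a * (MM * bnorm y).
Proof.
  intros Ha Hg.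
  assert (H: bnorm (bsub (Vint x a) (bscal a x)) <= a * (a * (MM * bnorm y))).
  { apply Vint_approx; [lra|]. intros s Hs. eapply Rle_trans. apply (gen_bound x y s Hg); lra.
    apply Rmult_le_compat_r. pose proof MM_ge1; pose proof (bnorm_nonneg y); nra. lra. }
  unfold P. replace (bsub (bscal (/ a) (Vint x a)) x) with (bscal (/ a) (bsub (Vint x a) (bscal a x))) by (vgroupF; lra).
  rewrite bnorm_scal, Rabs_pos_eq by (left; apply Rinv_0_lt_compat; lra).
  apply Rle_trans with (/ a * (a * (a * (MM * bnorm y)))).
  apply Rmult_le_compat_l; auto. left; apply Rinv_0_lt_compat; lra. right; field; lra.
Qed.

Lemma P_Bd a y c : 0 < a -> (forall r, 0 <= r -> bnorm (T r y) <= c) -> forall r, 0 <= r -> bnorm (T r (P a y)) <= c.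
Proof.
  intros Ha H r Hr. rewrite P_T by auto. unfold P.
  assert (bnorm (bsub (Vint (T r y) a) (bscal a bzero)) <= a * c).
  { apply Vint_approx; [lra|]. intros s Hs. replace (bsub (T s (T r y)) bzero) with (T s (T r y)) by vgroup.
    rewrite <- T_add by lra. apply H; lra. }
  rewrite bscal_0r in H0. replace (bsub (Vint (T r y) a) bzero) with (Vint (T r y) a) in H0 by vgroup.
  rewrite bnorm_scal, Rabs_pos_eq by (left; apply Rinv_0_lt_compat; lra).
  apply Rle_trans with (/ a * (a * c)). apply Rmult_le_compat_l; auto. left; apply Rinv_0_lt_compat; lra.
  right; field; lra.
Qed.

Fixpoint Q (k n : nat) (y : X) : X :=
  match n with O => y | S n' => P (aa k) (Q (S k) n' y) end.

Lemma Q_succ k n y : Q k (S n) y = Q k n (P (aa (k + n)) y).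
Proof.
  revert k. induction n; intros k. simpl. rewrite Nat.add_0_r; auto.
  change (Q k (S (S n)) y) with (P (aa k) (Q (S k) (S n) y)). rewrite IHn.
  rewrite <- Nat.add_succ_comm. auto.
Qed.

Lemma Q_linear k n : is_linear (Q k n).
Proof.
  revert k. induction n; intros k; simpl. split; auto.
  destruct (IHn (S k)) as [H1 H2]. destruct (P_linear (aa k) (aa_pos k)) as [P1 P2].
  split; intros. rewrite H1, P1; auto. rewrite H2, P2; auto.
Qed.

Lemma Q_T k n r y : 0 <= r -> T r (Q k n y) = Q k n (T r y).
Proof.
  revert k. induction n; intros k Hr; simpl; auto. rewrite P_T by (auto; apply aa_pos). rewrite IHn; auto.
Qed.

Lemma Q_P k n b y : 0 < b -> P b (Q k n y) = Q k n (P b y).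
Proof.
  revert k. induction n; intros k Hb; simpl; auto. rewrite P_comm by (auto; apply aa_pos). rewrite IHn; auto.
Qed.

Lemma Q_Bd k n y c : (forall r, 0 <= r -> bnorm (T r y) <= c) -> forall r, 0 <= r -> bnorm (T r (Q k n y)) <= c.
Proof.
  revert k. induction n; intros k H; simpl; auto. apply P_Bd. apply aa_pos. apply IHn; auto.
Qed.

Lemma Q_bound k n y : bnorm (Q k n y) <= MM * bnorm y.
Proof.
  rewrite <- (T_0 (Q k n y)). apply Q_Bd; [|lra]. intros; apply T_bound; auto.
Qed.

Lemma Q_lip k n y1 y2 : bnorm (bsub (Q k n y1) (Q k n y2)) <= MM * bnorm (bsub y1 y2).
Proof. rewrite <- lin_sub by apply Q_linear. apply Q_bound. Qed.

Definition C0 : R := MM * MM * (1 + MM).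
Lemma C0_pos : 1 <= C0.
Proof. unfold C0. pose proof MM_ge1. assert (1 <= MM * MM) by nra. nra. Qed.

Lemma Q_step k n y : bnorm (bsub (Q k (S n) y) (Q k n y)) <= C0 * aa n * bnorm y.
Proof.
  pose proof MM_ge1 as HM. pose proof (bnorm_nonneg y) as Hy. unfold C0.
  destruct n.
  - simpl. replace (aa 0) with 1 by (unfold aa; simpl; auto). eapply Rle_trans. apply bnorm_sub_le.
    pose proof (P_bound (aa k) y (aa_pos k)). assert (1 <= MM * MM) by nra. assert (1 + MM <= MM * MM * (1 + MM)) by nra. nra.
  - rewrite Q_succ. change (Q k (S n) (P (aa (k + S n)) y)) with (P (aa k) (Q (S k) n (P (aa (k + S n)) y))).
    change (Q k (S n) y) with (P (aa k) (Q (S k) n y)).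
    set (b := aa (k + S n)). assert (Hb: 0 < b) by apply aa_pos.
    rewrite <- Q_P by auto. set (u := Q (S k) n y). rewrite P_comm by (auto; apply aa_pos).
    set (w := P (aa k) u).
    pose proof (P_near b w _ Hb (P_gen (aa k) u (aa_pos k))) as H.
    eapply Rle_trans. apply H.
    pose proof (aa_pos k). pose proof (aa_pos (S n)).
    assert (Hu: bnorm u <= MM * bnorm y) by apply Q_bound.
    assert (Hz: bnorm (bscal (/ aa k) (bsub u (T (aa k) u))) <= / aa k * ((1 + MM) * (MM * bnorm y))).
    { rewrite bnorm_scal, Rabs_pos_eq by (left; apply Rinv_0_lt_compat; lra).
      apply Rmult_le_compat_l. left; apply Rinv_0_lt_compat; lra.
      eapply Rle_trans. apply bnorm_sub_le. pose proof (T_bound (aa k) u ltac:(lra)).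
      pose proof (bnorm_nonneg u). nra. }
    assert (Eb: b = aa k * aa (S n)) by (unfold b; apply aa_add).
    apply Rle_trans with (b * (MM * (/ aa k * ((1 + MM) * (MM * bnorm y))))).
    { apply Rmult_le_compat_l; [lra|]. apply Rmult_le_compat_l; [lra|]. auto. }
    right. rewrite Eb. field. lra.
Qed.

Lemma Q_cauchy k n j y : bnorm (bsub (Q k (n + j) y) (Q k n y)) <= 2 * C0 * bnorm y * (aa n - aa (n + j)).
Proof.
  induction j.
  - rewrite Nat.add_0_r. replace (bsub (Q k n y) (Q k n y)) with (@bzero X) by vgroup. rewrite bnorm_zero. lra.
  - rewrite Nat.add_succ_r. eapply Rle_trans. apply (bnorm_sub_tri _ (Q k (n + j) y)).
    pose proof (Q_step k (n + j) y). rewrite aa_S. lra.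
Qed.

Definition J (k : nat) (y : X) : X := epsilon (inhabits bzero) (blim (fun n => Q k n y)).

Lemma J_lim k y : blim (fun n => Q k n y) (J k y).
Proof.
  unfold J. apply epsilon_spec. apply cauchy_lim.
  intros eps He. pose proof C0_pos. pose proof (bnorm_nonneg y).
  destruct (aa_small (eps / (4 * C0 * bnorm y + 1))) as [N HN]. apply Rdiv_lt_0_compat. lra. nra.
  exists N. intros m n Hm Hn.
  pose proof (Q_cauchy k N (m - N) y) as H1. pose proof (Q_cauchy k N (n - N) y) as H2.
  replace (N + (m - N))%nat with m in H1 by lia. replace (N + (n - N))%nat with n in H2 by lia.
  pose proof (aa_pos m). pose proof (aa_pos n). specialize (HN N (le_n N)).
  pose proof (bnorm_sub_tri (Q k m y) (Q k N y) (Q k n y)). rewrite (bnorm_sub_sym (Q k N y)) in H5.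
  assert (0 <= C0 * bnorm y) by nra. assert (2 * C0 * bnorm y * (aa N - aa m) + 2 * C0 * bnorm y * (aa N - aa n) <= 4 * C0 * bnorm y * aa N) by nra.
  assert (4 * C0 * bnorm y * aa N < eps).
  { apply Rle_lt_trans with ((4 * C0 * bnorm y + 1) * aa N). pose proof (aa_pos N); nra.
    apply (Rmult_lt_compat_l (4 * C0 * bnorm y + 1)) in HN; [|nra].
    replace ((4 * C0 * bnorm y + 1) * (eps / (4 * C0 * bnorm y + 1))) with eps in HN by (field; nra). lra. }
  lra.
Qed.

Lemma J_rec k y : J k y = P (aa k) (J (S k) y).
Proof.
  apply (blim_unique (fun n => Q k (n + 1) y)). apply (blim_shift (fun n => Q k n y)), J_lim.
  apply (blim_ext (fun n => P (aa k) (Q (S k) n y))). exists O; intros. rewrite Nat.add_1_r; auto.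
  apply (blim_Lip _ MM). intros; apply P_lip, aa_pos. apply J_lim.
Qed.

Lemma J_linear k : is_linear (J k).
Proof.
  split.
  - intros u v. apply (blim_unique (fun n => Q k n (badd u v))). apply J_lim.
    apply (blim_ext (fun n => badd (Q k n u) (Q k n v))). exists O; intros; symmetry; apply Q_linear.
    apply blim_add; apply J_lim.
  - intros c u. apply (blim_unique (fun n => Q k n (bscal c u))). apply J_lim.
    apply (blim_ext (fun n => bscal c (Q k n u))). exists O; intros; symmetry; apply Q_linear.
    apply blim_scal; apply J_lim.
Qed.

Lemma J_T k r y : 0 <= r -> T r (J k y) = J k (T r y).
Proof.
  intros Hr. apply (blim_unique (fun n => Q k n (T r y))); [|apply J_lim].
  apply (blim_ext (fun n => T r (Q k n y))). exists O; intros; apply Q_T; auto.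
  apply (blim_Lip _ MM). intros; apply T_lip; auto. apply J_lim.
Qed.

Lemma J_bound k y : bnorm (J k y) <= MM * bnorm y.
Proof. apply (blim_norm_le (fun n => Q k n y)). apply J_lim. exists O; intros; apply Q_bound. Qed.

Lemma J_lip k y1 y2 : bnorm (bsub (J k y1) (J k y2)) <= MM * bnorm (bsub y1 y2).
Proof. rewrite <- lin_sub by apply J_linear. apply J_bound. Qed.

Lemma J_near x y : gen_rel T x y -> bnorm (bsub (J 0 x) x) <= 2 * (MM * (MM * bnorm y)).
Proof.
  intros Hg. apply (blim_le (fun n => Q 0 n x)). apply J_lim. exists O. intros n _.
  cut (bnorm (bsub (Q 0 n x) x) <= 2 * (MM * (MM * bnorm y)) * (1 - aa n)).
  { intros H. pose proof (aa_pos n). pose proof MM_ge1. pose proof (bnorm_nonneg y).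
    assert (0 <= MM * (MM * bnorm y)) by nra. nra. }
  induction n.
  - simpl. replace (bsub x x) with (@bzero X) by vgroup. rewrite bnorm_zero. unfold aa; simpl; lra.
  - eapply Rle_trans. apply (bnorm_sub_tri _ (Q 0 n x)).
    rewrite Q_succ. simpl Nat.add. rewrite <- lin_sub by apply Q_linear.
    eapply Rle_trans. apply Rplus_le_compat_r. apply Q_bound.
    pose proof (P_near (aa n) x y (aa_pos n) Hg). rewrite aa_S.
    pose proof MM_ge1. nra.
Qed.

Definition Dk (k : nat) (y : X) : X := bscal (/ aa k) (bsub y (T (aa k) y)).

Lemma J_gen k y : gen_rel T (J k y) (J (S k) (Dk k y)).
Proof.
  rewrite J_rec. unfold Dk.
  replace (J (S k) (bscal (/ aa k) (bsub y (T (aa k) y)))) with (bscal (/ aa k) (bsub (J (S k) y) (T (aa k) (J (S k) y)))).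
  apply P_gen, aa_pos.
  rewrite (proj2 (J_linear (S k))), (lin_sub (J (S k))) by apply J_linear. rewrite J_T by (left; apply aa_pos). auto.
Qed.

Lemma J_dom n : forall k y, in_dom_pow T n (J k y).
Proof.
  induction n; intros k y; simpl; auto. exists (J (S k) (Dk k y)). split. apply J_gen. apply IHn.
Qed.

Definition Ces (t : R) (u : X) : X := bscal (/ t) (Vint u t).

Lemma Ces_cesaro t u : 0 < t -> cesaro T t u (Ces t u).
Proof. intros Ht. exists (Vint u t). split; auto. apply Vint_integral; lra. Qed.

Lemma Ces_linear t : 0 < t -> is_linear (Ces t).
Proof.
  intros Ht. unfold Ces. split.
  - intros u v. rewrite (proj1 (Vint_linear t ltac:(lra))). vgroup.
  - intros c u. rewrite (proj2 (Vint_linear t ltac:(lra))). vgroup.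
Qed.

Lemma Ces_lip t a b : 0 < t -> bnorm (bsub (Ces t a) (Ces t b)) <= MM * bnorm (bsub a b).
Proof.
  intros Ht. rewrite <- lin_sub by (apply Ces_linear; auto). unfold Ces.
  rewrite bnorm_scal, Rabs_pos_eq by (left; apply Rinv_0_lt_compat; lra).
  apply Rle_trans with (/ t * (t * (MM * bnorm (bsub a b)))).
  apply Rmult_le_compat_l. left; apply Rinv_0_lt_compat; lra. apply Vint_bound; lra.
  right; field; lra.
Qed.

Lemma Ces_near t w v : 0 < t -> gen_rel T w v -> bnorm (bsub w (Ces t w)) <= t * (MM * bnorm v).
Proof.
  intros Ht Hg.
  assert (H: bnorm (bsub (Vint w t) (bscal t w)) <= t * (t * (MM * bnorm v))).
  { apply Vint_approx; [lra|]. intros s Hs. eapply Rle_trans. apply (gen_bound w v s Hg); lra.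
    apply Rmult_le_compat_r. pose proof MM_ge1; pose proof (bnorm_nonneg v); nra. lra. }
  unfold Ces. replace (bsub w (bscal (/ t) (Vint w t))) with (bscal (- / t) (bsub (Vint w t) (bscal t w))) by (vgroupF; lra).
  rewrite bnorm_scal, Rabs_left by (apply Ropp_lt_gt_0_contravar; apply Rinv_0_lt_compat; lra).
  rewrite Ropp_involutive.
  apply Rle_trans with (/ t * (t * (t * (MM * bnorm v)))).
  apply Rmult_le_compat_l; auto. left; apply Rinv_0_lt_compat; lra. right; field; lra.
Qed.

Context (phi : R -> R)
  (hphi_pos : forall t, 0 < t -> 0 < phi t)
  (hphi_lim : forall eps, 0 < eps -> exists t0, forall t, t0 <= t -> phi t < eps)
  (hrate : forall x, in_dom_inf T x ->
     exists C t0, 0 < t0 /\ forall t c, t0 <= t -> cesaro T t x c -> bnorm c <= C * phi t).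

Lemma nat_above r : exists k : nat, r < INR k.
Proof.
  destruct (flo_spec (Rabs r) (Rabs_pos r)) as [_ H]. exists (S (flo (Rabs r))). rewrite S_INR.
  pose proof (Rle_abs r). lra.
Qed.

Lemma ubp : exists K k, 0 <= K /\ forall z t, INR k <= t -> 0 < t -> bnorm (Ces t (J 0 z)) <= K * phi t * bnorm z.
Proof.
  set (F := fun (k : nat) z => forall t, INR k <= t -> 0 < t -> bnorm (Ces t (J 0 z)) <= INR k * phi t).
  assert (Hcl: forall k (zn : nat -> X) z, blim zn z -> (forall n, F k (zn n)) -> F k z).
  { intros k zn z Hz HF t Ht1 Ht2. apply (blim_norm_le (fun n => Ces t (J 0 (zn n)))).
    apply (blim_Lip (fun u => Ces t (J 0 u)) (MM * MM)).
    intros a b. eapply Rle_trans. apply Ces_lip; auto. pose proof MM_ge1.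
    rewrite Rmult_assoc. apply Rmult_le_compat_l. lra. apply J_lip. auto.
    exists O; intros n _; apply HF; auto. }
  assert (Hcov: forall z, exists k, F k z).
  { intros z. destruct (hrate (J 0 z)) as [C [t0 [Ht0 Hb]]]. intros n; apply J_dom.
    destruct (nat_above (Rabs C + t0)) as [k Hk]. exists k. intros t Ht1 Ht2.
    eapply Rle_trans. apply (Hb t). pose proof (Rabs_pos C); lra. apply Ces_cesaro; auto.
    apply Rmult_le_compat_r. left; apply hphi_pos; auto. pose proof (Rle_abs C); lra. }
  destruct (baire_thm F Hcl Hcov) as [k [z0 [r [Hr Hball]]]].
  exists (4 * INR k / r), k. split. apply Rmult_le_pos. pose proof (pos_INR k); lra. left; apply Rinv_0_lt_compat; auto.
  intros z t Ht1 Ht2.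
  assert (Hlin: is_linear (fun u => Ces t (J 0 u))).
  { destruct (Ces_linear t Ht2) as [C1 C2]. destruct (J_linear 0) as [J1 J2].
    split; intros. rewrite J1, C1; auto. rewrite J2, C2; auto. }
  assert (Hp: 0 < phi t) by auto. pose proof (pos_INR k).
  destruct (Req_dec (bnorm z) 0) as [Hz|Hz].
  - apply bnorm_eq0 in Hz. subst z. rewrite (lin_zero _ Hlin), bnorm_zero. lra.
  - pose proof (bnorm_nonneg z). assert (Hzp: 0 < bnorm z) by lra.
    set (c := r / (2 * bnorm z)). assert (Hc: 0 < c) by (apply Rdiv_lt_0_compat; lra).
    assert (F1: F k (badd z0 (bscal c z))).
    { apply Hball. replace (bsub (badd z0 (bscal c z)) z0) with (bscal c z) by vgroup.
      rewrite bnorm_scal, Rabs_pos_eq by lra. unfold c. replace (r / (2 * bnorm z) * bnorm z) with (r / 2) by (field; lra). lra. }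
    assert (F0: F k z0).
    { apply Hball. replace (bsub z0 z0) with (@bzero X) by vgroup. rewrite bnorm_zero; lra. }
    specialize (F1 t Ht1 Ht2). specialize (F0 t Ht1 Ht2).
    assert (E: bscal c (Ces t (J 0 z)) = bsub (Ces t (J 0 (badd z0 (bscal c z)))) (Ces t (J 0 z0))).
    { rewrite (proj1 Hlin), (proj2 Hlin). vgroup. }
    assert (Hb: c * bnorm (Ces t (J 0 z)) <= 2 * (INR k * phi t)).
    { rewrite <- (Rabs_pos_eq c) by lra. rewrite <- bnorm_scal, E. eapply Rle_trans. apply bnorm_sub_le. lra. }
    apply (Rmult_le_reg_l c); auto.
    eapply Rle_trans. apply Hb. right. unfold c. field. lra.
Qed.

Definition Rg (y : X) : Prop := exists x, gen_rel T x y.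

Lemma Rg_sub y1 y2 : Rg y1 -> Rg y2 -> Rg (bsub y1 y2).
Proof. intros [x1 H1] [x2 H2]. exists (bsub x1 x2). apply gen_rel_sub; auto. Qed.
Lemma Rg_scal c y : Rg y -> Rg (bscal c y).
Proof. intros [x H]. exists (bscal c x). apply gen_rel_scal; auto. Qed.
Lemma Rg_zero : Rg bzero.
Proof. exists bzero. apply gen_rel_zero. Qed.
Lemma Rg_add y1 y2 : Rg y1 -> Rg y2 -> Rg (badd y1 y2).
Proof. intros. replace (badd y1 y2) with (bsub y1 (bscal (-1) y2)) by vgroup. apply Rg_sub; auto. apply Rg_scal; auto. Qed.
Lemma Rg_vsum n f : (forall k, (k < n)%nat -> Rg (f k)) -> Rg (vsum n f).
Proof. induction n; simpl; intros H. apply Rg_zero. apply Rg_add. apply IHn; auto. apply H; lia. Qed.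

Lemma Rg_Ts s y : 0 <= s -> Rg (bsub (T s y) y).
Proof.
  intros [Hs|Hs].
  - replace (bsub (T s y) y) with (bscal (-1) (bsub y (T s y))) by vgroup. apply Rg_scal. exists (Vint y s). apply Vint_gen2; auto.
  - subst. rewrite T_0. replace (bsub y y) with (@bzero X) by vgroup. apply Rg_zero.
Qed.

Section Closed.
Context (cb : R) (Hcb : forall x y, gen_rel T x y -> bnorm x <= cb * bnorm y).

Lemma Rg_closed (yn : nat -> X) y : blim yn y -> (forall n, Rg (yn n)) -> Rg y.
Proof.
  intros Hy HR.
  set (xn := fun n => epsilon (inhabits bzero) (fun x => gen_rel T x (yn n))).
  assert (Hxn: forall n, gen_rel T (xn n) (yn n)).
  { intros n. unfold xn. apply epsilon_spec. apply HR. }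
  destruct (cauchy_lim xn) as [x Hx].
  { intros eps He. destruct (Hy (eps / (2 * (Rabs cb + 1)))) as [N HN].
    { apply Rdiv_lt_0_compat; [lra| pose proof (Rabs_pos cb); lra]. }
    exists N; intros m n Hm Hn.
    pose proof (Hcb _ _ (gen_rel_sub _ _ _ _ (Hxn m) (Hxn n))) as H.
    pose proof (HN m Hm). pose proof (HN n Hn).
    pose proof (bnorm_sub_tri (yn m) y (yn n)) as HT3. rewrite (bnorm_sub_sym y) in HT3.
    pose proof (Rle_abs cb). pose proof (Rabs_pos cb). pose proof (bnorm_nonneg (bsub (yn m) (yn n))).
    assert (bnorm (bsub (yn m) (yn n)) < eps / (Rabs cb + 1)).
    { replace (eps / (Rabs cb + 1)) with (eps / (2 * (Rabs cb + 1)) + eps / (2 * (Rabs cb + 1))) by (field; lra). lra. }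
    apply Rle_lt_trans with (Rabs cb * bnorm (bsub (yn m) (yn n))). nra.
    apply Rle_lt_trans with (Rabs cb * (eps / (Rabs cb + 1))). nra.
    apply (Rmult_lt_reg_r (Rabs cb + 1)). lra.
    replace (Rabs cb * (eps / (Rabs cb + 1)) * (Rabs cb + 1)) with (Rabs cb * eps) by (field; lra). nra. }
  exists x. apply (gen_closed xn yn); auto.
Qed.

Lemma Rg_Vint y t : 0 <= t -> Rg (bsub (Vint y t) (bscal t y)).
Proof.
  intros Ht. apply (Rg_closed (fun n => bsub (RS y t (S n)) (bscal t y))).
  - apply (blim_sub (fun n => RS y t (S n)) (fun _ => bscal t y)).
    apply (blim_ext (fun n => RS y t (n + 1))). exists O; intros; rewrite Nat.add_1_r; auto.
    apply (blim_shift (RS y t)). apply Vint_lim; auto. apply blim_const.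
  - intros n. assert (HnR: 0 < INR (S n)) by (apply lt_0_INR; lia).
    replace (bscal t y) with (vsum (S n) (fun _ => bscal (t / INR (S n)) y)).
    2:{ rewrite vsum_const, bscal_assoc. f_equal. field. lra. }
    unfold RS. rewrite <- vsum_sub. apply Rg_vsum. intros k Hk.
    replace (bsub (bscal (t / INR (S n)) (T (INR k * t / INR (S n)) y)) (bscal (t / INR (S n)) y))
      with (bscal (t / INR (S n)) (bsub (T (INR k * t / INR (S n)) y) y)) by vgroup.
    apply Rg_scal. apply Rg_Ts. apply sk_bounds; auto.
Qed.

Lemma Rg_P a y : 0 < a -> Rg (bsub y (P a y)).
Proof.
  intros Ha. replace (bsub y (P a y)) with (bscal (- / a) (bsub (Vint y a) (bscal a y))) by (unfold P; vgroupF; lra).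
  apply Rg_scal, Rg_Vint; lra.
Qed.

Lemma Rg_Ces t y : 0 < t -> Rg (bsub y (Ces t y)).
Proof.
  intros Ht. replace (bsub y (Ces t y)) with (bscal (- / t) (bsub (Vint y t) (bscal t y))) by (unfold Ces; vgroupF; lra).
  apply Rg_scal, Rg_Vint; lra.
Qed.

Lemma Rg_Q n : forall k y, Rg (bsub y (Q k n y)).
Proof.
  induction n; intros k y.
  - simpl. replace (bsub y y) with (@bzero X) by vgroup. apply Rg_zero.
  - rewrite Q_succ. replace (bsub y (Q k n (P (aa (k + n)) y)))
      with (badd (bsub y (P (aa (k + n)) y)) (bsub (P (aa (k + n)) y) (Q k n (P (aa (k + n)) y)))) by vgroup.
    apply Rg_add. apply Rg_P, aa_pos. apply IHn.
Qed.

Lemma Rg_J y : Rg (bsub y (J 0 y)).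
Proof.
  apply (Rg_closed (fun n => bsub y (Q 0 n y))). apply blim_sub. apply blim_const. apply J_lim.
  intros; apply Rg_Q.
Qed.

Lemma Rg_all (L : X -> X) y : (forall z, Rg (bsub z (L z))) -> (forall z, bnorm (L z) <= / 2 * bnorm z) -> Rg y.
Proof.
  intros H1 H2.
  set (Lp := fix Lp (n : nat) : X := match n with O => y | S m => L (Lp m) end).
  assert (A1: forall n, Rg (bsub y (Lp n))).
  { induction n; simpl. replace (bsub y y) with (@bzero X) by vgroup. apply Rg_zero.
    replace (bsub y (L (Lp n))) with (badd (bsub y (Lp n)) (bsub (Lp n) (L (Lp n)))) by vgroup.
    apply Rg_add; auto. }
  assert (A2: forall n, bnorm (Lp n) <= aa n * bnorm y).
  { induction n; simpl. unfold aa; simpl; lra. eapply Rle_trans. apply H2. rewrite aa_S. lra. }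
  apply (Rg_closed (fun n => bsub y (Lp n))); auto.
  assert (HL: blim Lp bzero).
  2:{ pose proof (blim_sub _ _ _ _ (blim_const y) HL) as HH. replace (bsub y bzero) with y in HH by vgroup. exact HH. }
  intros eps He. destruct (aa_small (eps / (bnorm y + 1))) as [N HN].
  apply Rdiv_lt_0_compat; [lra| pose proof (bnorm_nonneg y); lra].
  exists N; intros n Hn. replace (bsub (Lp n) bzero) with (Lp n) by vgroup.
  eapply Rle_lt_trans. apply A2. specialize (HN n Hn). pose proof (bnorm_nonneg y). pose proof (aa_pos n).
  apply Rle_lt_trans with (aa n * (bnorm y + 1)). nra.
  apply (Rmult_lt_compat_r (bnorm y + 1)) in HN; [|lra].
  replace (eps / (bnorm y + 1) * (bnorm y + 1)) with eps in HN by (field; lra). lra.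
Qed.
End Closed.

Lemma main_inv : exists cb, (forall x y, gen_rel T x y -> bnorm x <= cb * bnorm y) /\ (forall y, Rg y).
Proof.
  destruct ubp as [K [k [HK Hub]]].
  destruct (hphi_lim (/ (2 * (K + 1)))) as [t0 Ht0]. apply Rinv_0_lt_compat; lra.
  set (t := Rmax (Rmax (INR k) 1) t0).
  assert (Ht1: INR k <= t) by (unfold t; eapply Rle_trans; [apply Rmax_l| apply Rmax_l]).
  assert (Ht2: 1 <= t) by (unfold t; eapply Rle_trans; [apply Rmax_r| apply Rmax_l]).
  assert (Ht3: t0 <= t) by (unfold t; apply Rmax_r).
  assert (Hphi: K * phi t <= / 2).
  { specialize (Ht0 t Ht3). pose proof (hphi_pos t ltac:(lra)).
    apply Rle_trans with (K * / (2 * (K + 1))). apply Rmult_le_compat_l; lra.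
    apply (Rmult_le_reg_r (2 * (K + 1))). lra. rewrite Rmult_assoc, Rinv_l by lra. lra. }
  pose proof MM_ge1 as HM.
  set (cb := 2 * (2 * (MM * (MM * 1)) + t * (MM * (MM * MM)))).
  assert (Hcb: forall x y, gen_rel T x y -> bnorm x <= cb * bnorm y).
  { intros x y Hg.
    set (w := J 0 x). set (v := J 1 (Dk 0 x)).
    assert (Hwv: gen_rel T w v) by apply J_gen.
    assert (Hv: bnorm v <= MM * (MM * bnorm y)).
    { eapply Rle_trans. apply J_bound. apply Rmult_le_compat_l. lra.
      unfold Dk. replace (aa 0) with 1 by (unfold aa; simpl; auto). rewrite Rinv_1, bscal_1.
      rewrite bnorm_sub_sym. eapply Rle_trans. apply (gen_bound x y 1 Hg); lra. lra. }
    pose proof (J_near x y Hg) as H1. fold w in H1.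
    pose proof (Ces_near t w v ltac:(lra) Hwv) as H2.
    pose proof (Hub x t Ht1 ltac:(lra)) as H3. fold w in H3.
    pose proof (bnorm_sub_tri x w (Ces t w)). rewrite (bnorm_sub_sym x w) in H.
    assert (bnorm x <= bnorm (bsub x (Ces t w)) + bnorm (Ces t w)).
    { replace x with (badd (bsub x (Ces t w)) (Ces t w)) at 1 by vgroup. apply bnorm_triangle. }
    pose proof (bnorm_nonneg x). pose proof (bnorm_nonneg y).
    assert (K * phi t * bnorm x <= / 2 * bnorm x) by nra.
    assert (t * (MM * bnorm v) <= t * (MM * (MM * (MM * bnorm y)))).
    { apply Rmult_le_compat_l. lra. apply Rmult_le_compat_l. lra. auto. }
    unfold cb. nra. }
  exists cb. split; auto.
  intros y. apply (Rg_all cb Hcb (fun z => Ces t (J 0 z))).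
  - intros z. replace (bsub z (Ces t (J 0 z))) with (badd (bsub z (J 0 z)) (bsub (J 0 z) (Ces t (J 0 z)))) by vgroup.
    apply Rg_add. apply (Rg_J cb Hcb). apply (Rg_Ces cb Hcb); lra.
  - intros z. eapply Rle_trans. apply Hub; auto; lra. pose proof (bnorm_nonneg z). nra.
Qed.

End Semi.

Theorem theoremA1 (X : Banach) (T : R -> X -> X) (phi : R -> R)
  (hT : bounded_C0_semigroup T)
  (hphi_pos : forall t, 0 < t -> 0 < phi t)
  (hphi_mono : forall s t, 0 < s -> s <= t -> phi t <= phi s)
  (hphi_lim : forall eps, 0 < eps -> exists t0, forall t, t0 <= t -> phi t < eps)
  (hrate : forall x, in_dom_inf T x ->
     exists C t0, 0 < t0 /\ forall t c, t0 <= t -> cesaro T t x c ->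
        bnorm c <= C * phi t) :
  exists B : X -> X,
    is_linear B /\
    (exists M, forall y, bnorm (B y) <= M * bnorm y) /\
    (forall y, gen_rel T (B y) y) /\
    (forall x y, gen_rel T x y -> B y = x).
Proof.
  destruct (main_inv T hT phi hphi_pos hphi_lim hrate) as [cb [Hcb Hsurj]].
  set (B := fun y => epsilon (inhabits bzero) (fun x => gen_rel T x y)).
  assert (HB: forall y, gen_rel T (B y) y).
  { intros y. unfold B. apply epsilon_spec. apply Hsurj. }
  assert (Huniq: forall x y, gen_rel T x y -> B y = x).
  { intros x y Hg. pose proof (Hcb _ _ (gen_rel_sub T hT _ _ _ _ (HB y) Hg)) as H.
    replace (bsub y y) with (@bzero X) in H by vgroup. rewrite bnorm_zero, Rmult_0_r in H.
    apply bsub_eq0. pose proof (bnorm_nonneg (bsub (B y) x)). lra. }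
  exists B. split; [|split; [|split]]; auto.
  - split.
    + intros u v. apply Huniq.
      replace (badd (B u) (B v)) with (bsub (B u) (bscal (-1) (B v))) by vgroup.
      replace (badd u v) with (bsub u (bscal (-1) v)) by vgroup.
      apply gen_rel_sub; auto. apply gen_rel_scal; auto.
    + intros c u. apply Huniq. apply gen_rel_scal; auto.
  - exists cb. intros y. apply Hcb; auto.
Qed.
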